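(* Let $n\ge2$ and $\xi=(\xi^{n-1},\xi_n)\in M_a^{n-1}\times M_s\subset[M(H^\infty(\mathbb{D}))]^n$. Let $\zeta=\{z_k\}_{k\in\mathbb{N}}\subset\mathbb{D}^{n-1}$ be a sequence that is the Cartesian product of interpolating sequences for $H^\infty(\mathbb{D})$ in the coordinate disks, is interpolating for $H^\infty(\mathbb{D}^{n-1})$, and whose closure in $[M(H^\infty(\mathbb{D}))]^{n-1}$ contains $\xi^{n-1}$. Let $R:H^\infty(\mathbb{D}^n)\to H^\infty(\mathbb{D}\times\mathbb{N})$, $R(f)(k):=f(z_k,\cdot)$, and $R^*(\varphi)=\varphi\circ R$. Let $G$ be an analytic disk in $M(H^\infty(\mathbb{D}\times\mathbb{N}))$ such that $R^*(G)$ contains a point $\eta\in F_\xi=\pi_n^{-1}(\xi)$. Then $R^*(G)\subset F_\xi$.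
   Context: $\mathbb{D}$ is the open unit disk; $M(B)$ is the maximal ideal space of a commutative unital Banach algebra $B$ with weak-* topology, $\hat f$ the Gelfand transform. $H^\infty(\mathbb{D}\times\mathbb{N})$ is the algebra of sequences $(g_k)_{k\in\mathbb{N}}$ of functions in $H^\infty(\mathbb{D})$ with $\sup_k\|g_k\|_\infty<\infty$, normed by this supremum. An analytic disk in $M(H^\infty(\mathbb{D}\times\mathbb{N}))$ is the image of a continuous injective map $\tau:\mathbb{D}\to M(H^\infty(\mathbb{D}\times\mathbb{N}))$ with $\hat f\circ\tau\in H^\infty(\mathbb{D})$ for all $f$ in the algebra. Interpolating sequences: every bounded sequence of values is attained by a function of the algebra. $\mathbb{D}^n$ embeds into $M(H^\infty(\mathbb{D}^n))$ by point evaluations with closure $\operatorname{cl}(\mathbb{D}^n)$; $\mathbb{D}^m$ embeds in $[M(H^\infty(\mathbb{D}))]^m$ coordinatewise. $\pi_n(\varphi)=(\varphi\circ\iota_1,\dots,\varphi\circ\iota_n)$ with $\iota_j(f)(z)=f(z_j)$; $F_\xi:=\pi_n^{-1}(\xi)\cap\operatorname{cl}(\mathbb{D}^n)$, which in this setting equals $\pi_n^{-1}(\xi)$. Pseudohyperbolic distance on $M(H^\infty(\mathbb{D}))$: $\rho(\xi,\eta)=\sup\{|\hat f(\eta)|:\hat f(\xi)=0,\|f\|_\infty\le1\}$; Gleason parts are the classes $\{\eta:\rho(\xi,\eta)<1\}$; $M_a$ is the union of non-singleton Gleason parts and $M_s$ its complement. *)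

(* Defs.v *)
From Stdlib Require Import Reals.
From Coquelicot Require Import Coquelicot.
From mathcomp Require Import ssreflect ssrfun ssrbool eqtype ssrnat fintype.

Set Implicit Arguments.
Unset Strict Implicit.
Open Scope R_scope.
Open Scope C_scope.

Definition in_disk (w : C) : Prop := Rlt (Cmod w) 1.
Definition in_polydisk (n : nat) (z : 'I_n -> C) : Prop := forall j, in_disk (z j).

Definition upd (n : nat) (z : 'I_n -> C) (j : 'I_n) (w : C) : 'I_n -> C :=
  fun i => if i == j then w else z i.

(** (z, w) in C^(n-1) x C viewed as a point of C^n (w is the last coordinate). *)
Definition ext (n : nat) (z : 'I_n.-1 -> C) (w : C) : 'I_n -> C :=
  fun j => oapp z w (insub (nat_of_ord j) : option 'I_n.-1).

Definition C_differentiable (g : C -> C) (w : C) : Prop :=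
  exists l : C, forall eps : R, Rlt 0 eps -> exists delta : R, Rlt 0 delta /\
    forall h : C, Rlt 0 (Cmod h) -> Rlt (Cmod h) delta ->
      Rle (Cmod (g (w + h) - g w - l * h)) (eps * Cmod h).

(** H^oo(D): bounded holomorphic functions on the unit disk
    (values outside D are irrelevant). *)
Definition Hinf1 (f : C -> C) : Prop :=
  (exists M : R, forall w, in_disk w -> Rle (Cmod (f w)) M) /\
  (forall w, in_disk w -> C_differentiable f w).

Definition continuous_at_pt (n : nat) (f : ('I_n -> C) -> C) (z : 'I_n -> C) : Prop :=
  forall eps : R, Rlt 0 eps -> exists delta : R, Rlt 0 delta /\
    forall z' : 'I_n -> C, (forall j, Rlt (Cmod (z' j - z j)) delta) ->
      Rlt (Cmod (f z' - f z)) eps.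

(** H^oo(D^n): bounded holomorphic functions on the polydisk; holomorphic =
    continuous and holomorphic in each variable separately. *)
Definition Hinf (n : nat) (f : ('I_n -> C) -> C) : Prop :=
  (exists M : R, forall z, in_polydisk z -> Rle (Cmod (f z)) M) /\
  (forall z, in_polydisk z -> continuous_at_pt f z) /\
  (forall z, in_polydisk z -> forall j : 'I_n, C_differentiable (fun w => f (upd z j w)) (z j)).

(** H^oo(D x N): uniformly bounded sequences of H^oo(D) functions. *)
Definition HinfDN (g : nat -> C -> C) : Prop :=
  (forall k, forall w, in_disk w -> C_differentiable (g k) w) /\
  (exists M : R, forall k w, in_disk w -> Rle (Cmod (g k w)) M).

(** Characters (points of the maximal ideal space) of a commutative unital
    complex algebra whose elements are represented by the members of a
    predicate [P] on a carrier [A], modulo the equality [eqv]. *)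
Definition is_character (A : Type) (P : A -> Prop) (eqv : A -> A -> Prop)
    (add mul : A -> A -> A) (scal : C -> A -> A) (one : A) (phi : A -> C) : Prop :=
  (forall f g, P f -> P g -> phi (add f g) = phi f + phi g) /\
  (forall c f, P f -> phi (scal c f) = c * phi f) /\
  (forall f g, P f -> P g -> phi (mul f g) = phi f * phi g) /\
  phi one = 1 /\
  (forall f g, P f -> P g -> eqv f g -> phi f = phi g).

Definition char1 (phi : (C -> C) -> C) : Prop :=
  is_character Hinf1 (fun f g => forall w, in_disk w -> f w = g w)
    (fun f g w => f w + g w) (fun f g w => f w * g w) (fun c f w => c * f w)
    (fun _ => 1) phi.

Definition charn (n : nat) (phi : (('I_n -> C) -> C) -> C) : Prop :=
  is_character (@Hinf n) (fun f g => forall z, in_polydisk z -> f z = g z)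
    (fun f g z => f z + g z) (fun f g z => f z * g z) (fun c f z => c * f z)
    (fun _ => 1) phi.

Definition charDN (phi : (nat -> C -> C) -> C) : Prop :=
  is_character HinfDN (fun f g => forall k w, in_disk w -> f k w = g k w)
    (fun f g k w => f k w + g k w) (fun f g k w => f k w * g k w)
    (fun c f k w => c * f k w) (fun _ _ => 1) phi.

Definition char1_eq (phi psi : (C -> C) -> C) : Prop :=
  forall f, Hinf1 f -> phi f = psi f.

Definition rho (xi eta : (C -> C) -> C) : Rbar :=
  Lub_Rbar (fun r => exists f, Hinf1 f /\ (forall w, in_disk w -> Rle (Cmod (f w)) 1)
                              /\ xi f = 0 /\ r = Cmod (eta f)).

(** Gleason part of xi: {eta in M : rho(xi,eta) < 1}.
    M_a: points whose Gleason part is not a singleton; M_s: its complement in M. *)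
Definition in_Ma (xi : (C -> C) -> C) : Prop :=
  char1 xi /\
  exists eta, char1 eta /\ Rbar_lt (rho xi eta) (Coquelicot.Rbar.Finite 1%R) /\ ~ char1_eq xi eta.

Definition in_Ms (xi : (C -> C) -> C) : Prop := char1 xi /\ ~ in_Ma xi.

Definition interpolating1 (w : nat -> C) : Prop :=
  (forall k, in_disk (w k)) /\
  forall a : nat -> C, (exists M : R, forall k, Rle (Cmod (a k)) M) ->
    exists f, Hinf1 f /\ forall k, f (w k) = a k.

Definition interpolating (n : nat) (z : nat -> 'I_n -> C) : Prop :=
  (forall k, in_polydisk (z k)) /\
  forall a : nat -> C, (exists M : R, forall k, Rle (Cmod (a k)) M) ->
    exists f, Hinf f /\ forall k, f (z k) = a k.

Definition is_cartesian_product (m : nat) (z : nat -> 'I_m -> C) (s : 'I_m -> nat -> C) : Prop :=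
  (forall k, exists l : 'I_m -> nat, forall j, z k j = s j (l j)) /\
  (forall l : 'I_m -> nat, exists k, forall j, z k j = s j (l j)).

(** xi in [M(H^oo(D))]^m lies in the closure (product of weak-* topologies) of
    the points z_k embedded coordinatewise as point evaluations. *)
Definition in_closure_seq (m : nat) (z : nat -> 'I_m -> C) (xi : 'I_m -> (C -> C) -> C) : Prop :=
  forall (p : nat) (F : 'I_p -> C -> C) (eps : R), (forall i, Hinf1 (F i)) -> Rlt 0 eps ->
    exists k, forall (j : 'I_m) (i : 'I_p), Rlt (Cmod (F i (z k j) - xi j (F i))) eps.

Definition Rmap (n : nat) (z : nat -> 'I_n.-1 -> C) (f : ('I_n -> C) -> C) : nat -> C -> C :=
  fun k w => f (ext (z k) w).

Definition Rstar (n : nat) (z : nat -> 'I_n.-1 -> C) (phi : (nat -> C -> C) -> C)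
  : (('I_n -> C) -> C) -> C :=
  fun f => phi (Rmap z f).

Definition pi_n (n : nat) (phi : (('I_n -> C) -> C) -> C) (j : 'I_n) : (C -> C) -> C :=
  fun f => phi (fun z => f (z j)).

Definition join_pt (n : nat) (xi' : 'I_n.-1 -> (C -> C) -> C) (xin : (C -> C) -> C)
  : 'I_n -> (C -> C) -> C :=
  fun j => oapp xi' xin (insub (nat_of_ord j) : option 'I_n.-1).

Definition in_fiber (n : nat) (xi : 'I_n -> (C -> C) -> C) (eta : (('I_n -> C) -> C) -> C) : Prop :=
  charn eta /\ forall j : 'I_n, char1_eq (pi_n eta j) (xi j).

Definition analytic_disk_map (tau : C -> (nat -> C -> C) -> C) : Prop :=
  (forall w, in_disk w -> charDN (tau w)) /\
  (forall w1 w2, in_disk w1 -> in_disk w2 ->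
     (forall g, HinfDN g -> tau w1 g = tau w2 g) -> w1 = w2) /\
  (forall g, HinfDN g -> forall w, in_disk w ->
     forall eps : R, Rlt 0 eps -> exists delta : R, Rlt 0 delta /\
       forall w', in_disk w' -> Rlt (Cmod (w' - w)) delta -> Rlt (Cmod (tau w' g - tau w g)) eps) /\
  (forall g, HinfDN g -> Hinf1 (fun w => tau w g)).

(* Main.v *)
Require Import Defs.
From Stdlib Require Import Reals Lra Psatz FunctionalExtensionality Classical.
From Coquelicot Require Import Coquelicot.
From mathcomp Require Import ssreflect ssrfun ssrbool eqtype ssrnat fintype.
Set Implicit Arguments.
Local Open Scope R_scope.
Local Open Scope C_scope.

Definition Dexp (g : C -> C) (q L : C) : Prop :=
  forall eps : R, (0 < eps)%R -> exists d : R, (0 < d)%R /\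
    forall u, (Cmod (u - q) < d)%R -> (Cmod (g u - g q - L * (u - q)) <= eps * Cmod (u - q))%R.
Definition Cdiff g q := exists L, Dexp g q L.
Definition Ccont (g : C -> C) (q : C) : Prop :=
  forall eps : R, (0 < eps)%R -> exists d : R, (0 < d)%R /\
    forall u, (Cmod (u - q) < d)%R -> (Cmod (g u - g q) < eps)%R.

Lemma Cmod_sub_sym (a b : C) : Cmod (a - b) = Cmod (b - a).
Proof. by rewrite -Cmod_opp; f_equal; ring. Qed.

Lemma Cmod_tri3 (a b c : C) : (Cmod (a + b + c) <= Cmod a + Cmod b + Cmod c)%R.
Proof. have h1 := Cmod_triangle (a + b) c; have h2 := Cmod_triangle a b; lra. Qed.

Lemma lt_min_l {x a b} : (x < Rmin a b)%R -> (x < a)%R.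
Proof. move=> H; apply: Rlt_le_trans H (Rmin_l _ _). Qed.
Lemma lt_min_r {x a b} : (x < Rmin a b)%R -> (x < b)%R.
Proof. move=> H; apply: Rlt_le_trans H (Rmin_r _ _). Qed.
Lemma min_pos a b : (0 < a)%R -> (0 < b)%R -> (0 < Rmin a b)%R.
Proof. by move=> ? ?; apply Rmin_case. Qed.

Lemma Cdiff_of_Cd g w : C_differentiable g w -> Cdiff g w.
Proof.
move=> [l Hl]; exists l => eps He.
have [d [Hd H]] := Hl eps He; exists d; split => // u Hu.
case: (Req_dec (Cmod (u - w)) 0) => H0.
- have -> : u = w.
    have E := Cmod_eq_0 _ H0.
    have -> : u = (u - w) + w by ring.
    rewrite E; ring.
  have -> : g w - g w - l * (w - w) = 0 by ring.
  rewrite Cmod_0; have := Cmod_ge_0 (w - w); nra.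
- have Hp : (0 < Cmod (u - w))%R by have := Cmod_ge_0 (u - w); lra.
  have := H (u - w) Hp Hu. by have -> : w + (u - w) = u by ring.
Qed.

Lemma Cd_of_Cdiff g w : Cdiff g w -> C_differentiable g w.
Proof.
move=> [l Hl]; exists l => eps He.
have [d [Hd H]] := Hl eps He; exists d; split => // h Hh0 Hh.
have := H (w + h). have -> : w + h - w = h by ring. by apply.
Qed.

Lemma Cdiff_cont g q : Cdiff g q -> Ccont g q.
Proof.
move=> [L HL] eps He.
have [d [Hd H]] := HL 1%R Rlt_0_1.
have HL0 := Cmod_ge_0 L.
exists (Rmin d (eps / (Cmod L + 2))); split.
  apply Rmin_case => //; apply Rdiv_lt_0_compat; lra.
move=> u Hu.
have Hu1 := lt_min_l Hu. have Hu2 := lt_min_r Hu.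
have E := H u Hu1.
have -> : g u - g q = (g u - g q - L * (u - q)) + L * (u - q) by ring.
apply: Rle_lt_trans; first apply Cmod_triangle.
rewrite Cmod_mult.
have Hm := Cmod_ge_0 (u - q).
have : (Cmod (u - q) * (Cmod L + 2) < eps)%R.
  by apply (Rmult_lt_reg_r (/ (Cmod L + 2))); [apply Rinv_0_lt_compat; lra|
   rewrite Rmult_assoc Rinv_r; [rewrite Rmult_1_r|lra]; exact Hu2].
nra.
Qed.

Lemma Dexp_cdiff g q L : Dexp g q L -> Cdiff g q.
Proof. by exists L. Qed.

Lemma Dexp_const c q : Dexp (fun _ => c) q 0.
Proof.
move=> eps He; exists 1%R; split; first lra.
move=> u _; have -> : c - c - 0 * (u - q) = 0 by ring.
rewrite Cmod_0; have := Cmod_ge_0 (u - q); nra.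
Qed.

Lemma Dexp_id q : Dexp (fun u => u) q 1.
Proof.
move=> eps He; exists 1%R; split; first lra.
move=> u _; have -> : u - q - 1 * (u - q) = 0 by ring.
rewrite Cmod_0; have := Cmod_ge_0 (u - q); nra.
Qed.

Lemma Dexp_plus f g q Lf Lg : Dexp f q Lf -> Dexp g q Lg ->
  Dexp (fun u => f u + g u) q (Lf + Lg).
Proof.
move=> Hf Hg eps He.
have [d1 [Hd1 H1]] := Hf (eps/2)%R ltac:(lra).
have [d2 [Hd2 H2]] := Hg (eps/2)%R ltac:(lra).
exists (Rmin d1 d2); split; first by apply min_pos.
move=> u Hu.
have E1 := H1 u (lt_min_l Hu). have E2 := H2 u (lt_min_r Hu).
have -> : f u + g u - (f q + g q) - (Lf + Lg) * (u - q) =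
  (f u - f q - Lf * (u - q)) + (g u - g q - Lg * (u - q)) by ring.
apply: Rle_trans; first apply Cmod_triangle. lra.
Qed.

Lemma Dexp_scal c f q Lf : Dexp f q Lf -> Dexp (fun u => c * f u) q (c * Lf).
Proof.
move=> Hf eps He.
have Hc := Cmod_ge_0 c.
have [d1 [Hd1 H1]] := Hf (eps / (Cmod c + 1))%R ltac:(apply Rdiv_lt_0_compat; lra).
exists d1; split => // u Hu.
have -> : c * f u - c * f q - c * Lf * (u - q) = c * (f u - f q - Lf * (u - q)) by ring.
rewrite Cmod_mult.
have E := H1 u Hu.
have Hm := Cmod_ge_0 (u - q).
have Hk : (Cmod c * (eps / (Cmod c + 1)) <= eps)%R.
  rewrite /Rdiv -Rmult_assoc. apply (Rmult_le_reg_r (Cmod c + 1)); first lra.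
  rewrite Rmult_assoc Rinv_l; lra.
have Hk0 : (0 <= eps / (Cmod c + 1))%R by apply Rlt_le, Rdiv_lt_0_compat; lra.
apply: Rle_trans; first by apply Rmult_le_compat_l; [exact Hc| exact E].
nra.
Qed.

Lemma mul_le4 a b x y : (0 <= a)%R -> (0 <= b)%R -> (a <= x)%R -> (b <= y)%R -> (a * b <= x * y)%R.
Proof. move=> *; apply Rmult_le_compat => //. Qed.

Lemma Dexp_mult f g q Lf Lg : Dexp f q Lf -> Dexp g q Lg ->
  Dexp (fun u => f u * g u) q (Lf * g q + f q * Lg).
Proof.
move=> Hf Hg eps He.
set A := (Cmod (g q) + 1)%R. set B := (Cmod (f q) + 1)%R. set K := (Cmod Lf + 1)%R.
have HA : (0 < A)%R by rewrite /A; have := Cmod_ge_0 (g q); lra.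
have HB : (0 < B)%R by rewrite /B; have := Cmod_ge_0 (f q); lra.
have HK : (0 < K)%R by rewrite /K; have := Cmod_ge_0 Lf; lra.
have [d1 [Hd1 H1]] := Hf (eps / (3 * A))%R ltac:(apply Rdiv_lt_0_compat; lra).
have [d2 [Hd2 H2]] := Hg (eps / (3 * B))%R ltac:(apply Rdiv_lt_0_compat; lra).
have [d3 [Hd3 H3]] := @Cdiff_cont g q (Dexp_cdiff Hg) (Rmin 1 (eps / (3 * K)))
   (@min_pos 1 (eps / (3 * K)) Rlt_0_1 ltac:(apply Rdiv_lt_0_compat; lra)).
exists (Rmin d1 (Rmin d2 d3)); split; first by repeat apply min_pos.
move=> u Hu.
have Hu1 := lt_min_l Hu. have Hu2 := lt_min_l (lt_min_r Hu). have Hu3 := lt_min_r (lt_min_r Hu).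
have E1 := H1 u Hu1. have E2 := H2 u Hu2. have E3 := H3 u Hu3.
have E3a := lt_min_l E3. have E3b := lt_min_r E3.
set m := Cmod (u - q).
have Hm : (0 <= m)%R by apply Cmod_ge_0.
have -> : f u * g u - f q * g q - (Lf * g q + f q * Lg) * (u - q) =
  (f u - f q - Lf * (u - q)) * g u + f q * (g u - g q - Lg * (u - q))
  + Lf * (u - q) * (g u - g q) by ring.
apply: Rle_trans; first apply Cmod_tri3.
rewrite !Cmod_mult -/m.
have Hgu : (Cmod (g u) <= A)%R.
  rewrite /A. have -> : g u = g q + (g u - g q) by ring.
  apply: Rle_trans; first apply Cmod_triangle. lra.
have T1 : (Cmod (f u - f q - Lf * (u - q)) * Cmod (g u) <= eps / (3 * A) * m * A)%R.
  apply mul_le4 => //; apply Cmod_ge_0.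
have T2 : (Cmod (f q) * Cmod (g u - g q - Lg * (u - q)) <= B * (eps / (3 * B) * m))%R.
  apply mul_le4 => //; try apply Cmod_ge_0. rewrite /B; lra.
have T3 : (Cmod Lf * m * Cmod (g u - g q) <= K * m * (eps / (3 * K)))%R.
  apply mul_le4 => //; try apply Cmod_ge_0.
  - apply Rmult_le_pos => //; apply Cmod_ge_0.
  - apply Rmult_le_compat_r => //; rewrite /K; lra.
  - lra.
have X1 : (eps / (3 * A) * m * A = eps / 3 * m)%R by field; lra.
have X2 : (B * (eps / (3 * B) * m) = eps / 3 * m)%R by field; lra.
have X3 : (K * m * (eps / (3 * K)) = eps / 3 * m)%R by field; lra.
lra.
Qed.

Lemma Dexp_inv f q Lf : Dexp f q Lf -> f q <> 0 ->
  Dexp (fun u => / f u) q (- Lf / (f q * f q)).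
Proof.
move=> Hf Hq eps He.
set a := Cmod (f q).
have Ha : (0 < a)%R by apply Cmod_gt_0.
set K := (Cmod Lf + 1)%R.
have HK : (0 < K)%R by rewrite /K; have := Cmod_ge_0 Lf; lra.
have He1 : (0 < eps * (a * a) / 4)%R by apply Rdiv_lt_0_compat; [apply Rmult_lt_0_compat; nra|lra].
have He3 : (0 < eps * (a * a * a) / (4 * K))%R.
  apply Rdiv_lt_0_compat; [apply Rmult_lt_0_compat => //; apply Rmult_lt_0_compat; nra|lra].
have [d1 [Hd1 H1]] := Hf _ He1.
have [d3 [Hd3 H3]] := @Cdiff_cont f q (Dexp_cdiff Hf) (Rmin (a / 2) (eps * (a * a * a) / (4 * K)))
   (@min_pos (a / 2) _ ltac:(lra) He3).
exists (Rmin d1 d3); split; first by apply min_pos.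
move=> u Hu.
have E1 := H1 u (lt_min_l Hu). have E3 := H3 u (lt_min_r Hu).
have E3a := lt_min_l E3. have E3b := lt_min_r E3.
set m := Cmod (u - q).
have Hm : (0 <= m)%R by apply Cmod_ge_0.
have Hfu : (a / 2 <= Cmod (f u))%R.
  have : (a <= Cmod (f u) + Cmod (f q - f u))%R.
    rewrite /a. have {1}-> : f q = f u + (f q - f u) by ring. apply Cmod_triangle.
  rewrite Cmod_sub_sym; lra.
have Hu0 : f u <> 0 by apply Cmod_gt_0; lra.
have -> : / f u - / f q - - Lf / (f q * f q) * (u - q) =
  (- (f u - f q - Lf * (u - q)) * f q + Lf * (u - q) * (f u - f q)) / (f u * (f q * f q)).
  by field; split.
rewrite Cmod_div; last by apply Cmult_neq_0 => //; apply Cmult_neq_0.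
rewrite !Cmod_mult -/a.
have Hden : (a / 2 * (a * a) <= Cmod (f u) * (a * a))%R by apply Rmult_le_compat_r; nra.
have Hnum : (Cmod (- (f u - f q - Lf * (u - q)) * f q + Lf * (u - q) * (f u - f q))
   <= eps * (a * a) / 4 * m * a + K * m * (eps * (a * a * a) / (4 * K)))%R.
  apply: Rle_trans; first apply Cmod_triangle.
  rewrite !Cmod_mult Cmod_opp -/a -/m.
  apply Rplus_le_compat.
  - apply (@Rmult_le_compat_r a); [lra|]. exact E1.
  - apply mul_le4; try apply Cmod_ge_0.
    + apply Rmult_le_pos; [apply Cmod_ge_0|lra].
    + apply Rmult_le_compat_r; rewrite /K; lra.
    + lra.
have X : (eps * (a * a) / 4 * m * a + K * m * (eps * (a * a * a) / (4 * K))
   = eps * m * (a / 2 * (a * a)))%R by field; lra.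
rewrite X in Hnum.
have Hpos : (0 < Cmod (f u) * (a * a))%R by apply Rmult_lt_0_compat; nra.
rewrite /Rdiv. apply (Rmult_le_reg_r (Cmod (f u) * (a * a))) => //.
rewrite Rmult_assoc Rinv_l; last lra.
rewrite Rmult_1_r.
apply: Rle_trans; first exact Hnum.
apply Rmult_le_compat_l; [apply Rmult_le_pos; lra| exact Hden].
Qed.

Definition CI (f : R -> C) (a b : R) : C := RInt (V:=C_R_CompleteNormedModule) f a b.
Definition CEx (f : R -> C) (a b : R) : Prop := ex_RInt (V:=C_R_NormedModule) f a b.

Lemma norm_C (x : C) : norm (K:=R_AbsRing) (V:=C_R_NormedModule) x = Cmod x.
Proof.
case: x => a b; rewrite /norm /= /prod_norm /Cmod /= /norm /= /abs /=.
f_equal. rewrite !Rmult_1_r -!Rabs_mult !Rabs_pos_eq //; nra.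
Qed.

Lemma C_eq (x y : C) : fst x = fst y -> snd x = snd y -> x = y.
Proof. case: x => a b; case: y => c d /= -> -> //. Qed.

Lemma CI_correct f a b : CEx f a b -> is_RInt (V:=C_R_NormedModule) f a b (CI f a b).
Proof. move=> H; exact: (RInt_correct (V:=C_R_CompleteNormedModule) f a b H). Qed.

Lemma CI_unique f a b l : is_RInt (V:=C_R_NormedModule) f a b l -> CI f a b = l.
Proof. move=> H; exact: (is_RInt_unique (V:=C_R_CompleteNormedModule) f a b l H). Qed.

Lemma CI_bound f a b M : (a <= b)%R -> CEx f a b ->
  (forall t, (a <= t <= b)%R -> (Cmod (f t) <= M)%R) -> (Cmod (CI f a b) <= (b - a) * M)%R.
Proof.
move=> Hab Hex HM. rewrite -norm_C.
apply: (norm_RInt_le_const (V:=C_R_NormedModule) f a b) => //.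
  by move=> t Ht; rewrite norm_C; apply HM.
exact: CI_correct.
Qed.

Lemma CI_plus f g a b : CEx f a b -> CEx g a b ->
  CI (fun t => f t + g t) a b = CI f a b + CI g a b.
Proof. move=> Hf Hg; exact: (RInt_plus (V:=C_R_CompleteNormedModule) f g a b Hf Hg). Qed.

Lemma CI_minus f g a b : CEx f a b -> CEx g a b ->
  CI (fun t => f t - g t) a b = CI f a b - CI g a b.
Proof. move=> Hf Hg; exact: (RInt_minus (V:=C_R_CompleteNormedModule) f g a b Hf Hg). Qed.

Lemma CEx_plus f g a b : CEx f a b -> CEx g a b -> CEx (fun t => f t + g t) a b.
Proof. move=> Hf Hg; exact: (ex_RInt_plus (V:=C_R_NormedModule) f g a b Hf Hg). Qed.

Lemma CEx_minus f g a b : CEx f a b -> CEx g a b -> CEx (fun t => f t - g t) a b.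
Proof. move=> Hf Hg; exact: (ex_RInt_minus (V:=C_R_NormedModule) f g a b Hf Hg). Qed.

Lemma is_CI_scal f a b I c : is_RInt (V:=C_R_NormedModule) f a b I ->
  is_RInt (V:=C_R_NormedModule) (fun t => c * f t) a b (c * I).
Proof.
move=> H.
have H1 := is_RInt_fct_extend_fst _ _ _ _ H.
have H2 := is_RInt_fct_extend_snd _ _ _ _ H.
case: c => c1 c2; case: I H H1 H2 => I1 I2 H H1 H2 /=.
apply: (is_RInt_fct_extend_pair _ _ _ (c1*I1 - c2*I2)%R (c1*I2 + c2*I1)%R).
- have X := is_RInt_minus _ _ _ _ _ _ (is_RInt_scal _ _ _ c1 _ H1) (is_RInt_scal _ _ _ c2 _ H2).
  have E : minus (scal c1 I1) (scal c2 I2) = (c1*I1 - c2*I2)%R by [].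
  rewrite E in X. eapply is_RInt_ext; last exact X.
  move=> t _ /=. by [].
- have X := is_RInt_plus _ _ _ _ _ _ (is_RInt_scal _ _ _ c1 _ H2) (is_RInt_scal _ _ _ c2 _ H1).
  have E : plus (scal c1 I2) (scal c2 I1) = (c1*I2 + c2*I1)%R by [].
  rewrite E in X. eapply is_RInt_ext; last exact X.
  move=> t _ /=. by [].
Qed.

Lemma CEx_scal f a b c : CEx f a b -> CEx (fun t => c * f t) a b.
Proof. move=> H; eexists; apply is_CI_scal; exact: CI_correct. Qed.

Lemma CI_scal f a b c : CEx f a b -> CI (fun t => c * f t) a b = c * CI f a b.
Proof. move=> H; apply CI_unique, is_CI_scal, CI_correct, H. Qed.

Lemma CEx_const a b c : CEx (fun _ => c) a b.
Proof. exact: (ex_RInt_const (V:=C_R_NormedModule)). Qed.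

Lemma CI_const a b c : CI (fun _ => c) a b = c * RtoC (b - a).
Proof.
rewrite /CI (RInt_const (V:=C_R_CompleteNormedModule)).
case: c => x y; rewrite /scal /= /prod_scal /= /scal /= /mult /=.
apply C_eq => /=; ring.
Qed.

Lemma is_CI_id a b : is_RInt (V:=C_R_NormedModule) (fun t => RtoC t) a b (RtoC ((b * b - a * a) / 2)).
Proof.
apply: is_RInt_fct_extend_pair => /=.
- have -> : ((b * b - a * a) / 2)%R = minus ((fun t : R => (t * t / 2)%R) b) ((fun t : R => (t * t / 2)%R) a)
    by rewrite /minus /plus /opp /=; field.
  apply: (is_RInt_derive (fun t : R => (t * t / 2)%R) (fun t : R => t)) => x _.
  + auto_derive => //; field.
  + exact: continuous_id.
- have := is_RInt_const a b 0%R. rewrite /scal /= /mult /= Rmult_0_r. done.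
Qed.

Lemma CEx_id a b : CEx (fun t => RtoC t) a b.
Proof. eexists; apply is_CI_id. Qed.

Lemma CI_affine u v a b :
  CI (fun t => u + v * RtoC t) a b = u * RtoC (b - a) + v * RtoC ((b * b - a * a) / 2).
Proof.
rewrite CI_plus; [|apply CEx_const|apply CEx_scal, CEx_id].
rewrite CI_const CI_scal; last apply CEx_id.
by rewrite (CI_unique (@is_CI_id a b)).
Qed.

Lemma CI_ext f g a b : (forall t, f t = g t) -> CI f a b = CI g a b.
Proof. by move=> H; rewrite (functional_extensionality f g H). Qed.

Lemma cont_path (g : C -> C) (p : R -> C) t0 :
  (forall t, (Cmod (p t - p t0) <= Rabs (t - t0))%R) -> Ccont g (p t0) ->
  @continuous R_UniformSpace C_R_CompleteNormedModule (fun t => g (p t)) t0.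
Proof.
move=> Hp Hc. apply/filterlim_locally => eps.
have [d [Hd H]] := Hc eps (cond_pos eps).
exists (mkposreal d Hd) => t Ht.
have Hl : (Cmod (p t - p t0) < d)%R.
  apply: Rle_lt_trans (Hp t) _. exact Ht.
have := H _ Hl.
case E : (g (p t)) => [x1 y1]; case E0 : (g (p t0)) => [x0 y0] Hm.
have := Rmax_Cmod ((x1, y1) - (x0, y0)); rewrite /= => Hm2.
split; rewrite /ball /= /AbsRing_ball /abs /minus /plus /opp /=.
- apply: Rle_lt_trans Hm. apply: Rle_trans Hm2; apply Rmax_l.
- apply: Rle_lt_trans Hm. apply: Rle_trans Hm2; apply Rmax_r.
Qed.

Lemma CEx_path (g : C -> C) (p : R -> C) a b :
  (a <= b)%R ->
  (forall t0 t, (Cmod (p t - p t0) <= Rabs (t - t0))%R) ->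
  (forall t, (a <= t <= b)%R -> Ccont g (p t)) -> CEx (fun t => g (p t)) a b.
Proof.
move=> Hab Hp Hc. apply: (ex_RInt_continuous (V:=C_R_CompleteNormedModule)).
move=> t; rewrite Rmin_left // Rmax_right // => Ht.
apply: cont_path; [exact: Hp|exact: Hc].
Qed.

Lemma path_h y0 t0 t : (Cmod ((t, y0) - (t0, y0)) <= Rabs (t - t0))%R.
Proof.
have -> : ((t, y0) - (t0, y0) : C) = RtoC (t - t0) by apply C_eq => /=; ring.
rewrite Cmod_R; lra.
Qed.

Lemma path_v x0 t0 t : (Cmod ((x0, t) - (x0, t0)) <= Rabs (t - t0))%R.
Proof.
have -> : ((x0, t) - (x0, t0) : C) = Ci * RtoC (t - t0) by apply C_eq => /=; ring.
rewrite Cmod_mult Cmod_Ci Cmod_R; lra.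
Qed.

Definition Bd (g : C -> C) (x0 x1 y0 y1 : R) : C :=
  CI (fun t => g (t, y0)) x0 x1 + Ci * CI (fun t => g (x1, t)) y0 y1
  - CI (fun t => g (t, y1)) x0 x1 - Ci * CI (fun t => g (x0, t)) y0 y1.

Definition EI (g : C -> C) (x0 x1 y0 y1 : R) : Prop :=
  CEx (fun t => g (t, y0)) x0 x1 /\ CEx (fun t => g (t, y1)) x0 x1 /\
  CEx (fun t => g (x0, t)) y0 y1 /\ CEx (fun t => g (x1, t)) y0 y1.

Definition onBd (x0 x1 y0 y1 : R) (z : C) : Prop :=
  ((x0 <= fst z <= x1)%R /\ (snd z = y0 \/ snd z = y1)) \/
  ((y0 <= snd z <= y1)%R /\ (fst z = x0 \/ fst z = x1)).

Lemma EI_of_cont g x0 x1 y0 y1 : (x0 <= x1)%R -> (y0 <= y1)%R ->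
  (forall z, onBd x0 x1 y0 y1 z -> Ccont g z) -> EI g x0 x1 y0 y1.
Proof.
move=> Hx Hy H; split; [|split; [|split]].
- apply: (@CEx_path g (fun t => (t, y0))) => //; first exact: path_h.
  move=> t Ht; apply H; left; simpl; split => //; tauto.
- apply: (@CEx_path g (fun t => (t, y1))) => //; first exact: path_h.
  move=> t Ht; apply H; left; simpl; split => //; tauto.
- apply: (@CEx_path g (fun t => (x0, t))) => //; first exact: path_v.
  move=> t Ht; apply H; right; simpl; split => //; tauto.
- apply: (@CEx_path g (fun t => (x1, t))) => //; first exact: path_v.
  move=> t Ht; apply H; right; simpl; split => //; tauto.
Qed.

Lemma Bd_plus f g x0 x1 y0 y1 : EI f x0 x1 y0 y1 -> EI g x0 x1 y0 y1 ->
  Bd (fun z => f z + g z) x0 x1 y0 y1 = Bd f x0 x1 y0 y1 + Bd g x0 x1 y0 y1.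
Proof.
move=> [F1 [F2 [F3 F4]]] [G1 [G2 [G3 G4]]]; rewrite /Bd.
rewrite (CI_plus F1 G1) (CI_plus F2 G2) (CI_plus F3 G3) (CI_plus F4 G4); ring.
Qed.

Lemma Bd_minus f g x0 x1 y0 y1 : EI f x0 x1 y0 y1 -> EI g x0 x1 y0 y1 ->
  Bd (fun z => f z - g z) x0 x1 y0 y1 = Bd f x0 x1 y0 y1 - Bd g x0 x1 y0 y1.
Proof.
move=> [F1 [F2 [F3 F4]]] [G1 [G2 [G3 G4]]]; rewrite /Bd.
rewrite (CI_minus F1 G1) (CI_minus F2 G2) (CI_minus F3 G3) (CI_minus F4 G4); ring.
Qed.

Lemma EI_plus f g x0 x1 y0 y1 : EI f x0 x1 y0 y1 -> EI g x0 x1 y0 y1 ->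
  EI (fun z => f z + g z) x0 x1 y0 y1.
Proof.
move=> [F1 [F2 [F3 F4]]] [G1 [G2 [G3 G4]]].
split; [|split; [|split]]; apply: CEx_plus => //.
Qed.

Lemma EI_minus f g x0 x1 y0 y1 : EI f x0 x1 y0 y1 -> EI g x0 x1 y0 y1 ->
  EI (fun z => f z - g z) x0 x1 y0 y1.
Proof.
move=> [F1 [F2 [F3 F4]]] [G1 [G2 [G3 G4]]].
split; [|split; [|split]]; apply: CEx_minus => //.
Qed.

Lemma Bd_scal c f x0 x1 y0 y1 : EI f x0 x1 y0 y1 ->
  Bd (fun z => c * f z) x0 x1 y0 y1 = c * Bd f x0 x1 y0 y1.
Proof.
move=> [F1 [F2 [F3 F4]]]; rewrite /Bd.
rewrite (CI_scal c F1) (CI_scal c F2) (CI_scal c F3) (CI_scal c F4); ring.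
Qed.

Lemma EI_scal c f x0 x1 y0 y1 : EI f x0 x1 y0 y1 -> EI (fun z => c * f z) x0 x1 y0 y1.
Proof.
move=> [F1 [F2 [F3 F4]]]; split; [|split; [|split]]; apply: CEx_scal => //.
Qed.

Lemma Bd_lin A B x0 x1 y0 y1 : Bd (fun z => A + B * z) x0 x1 y0 y1 = 0.
Proof.
rewrite /Bd; cbv beta.
rewrite (CI_ext (fun t => A + B * (t, y0)) (fun t => (A + B * (0, y0)) + B * RtoC t) x0 x1);
  last by move=> t; case: A => ? ?; case: B => ? ?; apply C_eq => /=; ring.
rewrite (CI_ext (fun t => A + B * (t, y1)) (fun t => (A + B * (0, y1)) + B * RtoC t) x0 x1);
  last by move=> t; case: A => ? ?; case: B => ? ?; apply C_eq => /=; ring.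
rewrite (CI_ext (fun t => A + B * (x0, t)) (fun t => (A + B * (x0, 0)) + (B * Ci) * RtoC t) y0 y1);
  last by move=> t; case: A => ? ?; case: B => ? ?; apply C_eq => /=; ring.
rewrite (CI_ext (fun t => A + B * (x1, t)) (fun t => (A + B * (x1, 0)) + (B * Ci) * RtoC t) y0 y1);
  last by move=> t; case: A => ? ?; case: B => ? ?; apply C_eq => /=; ring.
rewrite !CI_affine.
case: A => ? ?; case: B => ? ?; apply C_eq => /=; field.
Qed.

Lemma Bd_bound g x0 x1 y0 y1 M : (x0 <= x1)%R -> (y0 <= y1)%R -> EI g x0 x1 y0 y1 ->
  (forall z, onBd x0 x1 y0 y1 z -> (Cmod (g z) <= M)%R) ->
  (Cmod (Bd g x0 x1 y0 y1) <= 2 * ((x1 - x0) + (y1 - y0)) * M)%R.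
Proof.
move=> Hx Hy [F1 [F2 [F3 F4]]] HM; rewrite /Bd.
have B1 := CI_bound Hx F1 (M := M) (fun t Ht => HM (t, y0) ltac:(left; simpl; tauto)).
have B2 := CI_bound Hx F2 (M := M) (fun t Ht => HM (t, y1) ltac:(left; simpl; tauto)).
have B3 := CI_bound Hy F3 (M := M) (fun t Ht => HM (x0, t) ltac:(right; simpl; tauto)).
have B4 := CI_bound Hy F4 (M := M) (fun t Ht => HM (x1, t) ltac:(right; simpl; tauto)).
set a := CI _ x0 x1 in B1 *. set b := CI _ y0 y1 in B4 *.
set c := CI _ x0 x1 in B2 *. set d := CI _ y0 y1 in B3 *.
have T : (Cmod (a + Ci * b - c - Ci * d) <= Cmod a + Cmod b + Cmod c + Cmod d)%R.
  have -> : a + Ci * b - c - Ci * d = (a + Ci * b) + (- c + - (Ci * d)) by ring.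
  apply: Rle_trans; first apply Cmod_triangle.
  have := Cmod_triangle a (Ci * b); have := Cmod_triangle (- c) (- (Ci * d)).
  rewrite !Cmod_opp !Cmod_mult Cmod_Ci; lra.
lra.
Qed.

Lemma Bd_splitx g x0 x1 x2 y0 y1 :
  CEx (fun t => g (t, y0)) x0 x1 -> CEx (fun t => g (t, y0)) x1 x2 ->
  CEx (fun t => g (t, y1)) x0 x1 -> CEx (fun t => g (t, y1)) x1 x2 ->
  Bd g x0 x2 y0 y1 = Bd g x0 x1 y0 y1 + Bd g x1 x2 y0 y1.
Proof.
move=> H1 H2 H3 H4; rewrite /Bd /CI.
rewrite -(RInt_Chasles (V:=C_R_CompleteNormedModule) _ _ _ _ H1 H2).
rewrite -(RInt_Chasles (V:=C_R_CompleteNormedModule) _ _ _ _ H3 H4).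
set A := RInt _ x0 x1. set B := RInt _ x1 x2. set C' := RInt _ x0 x1.
set D := RInt _ x1 x2.
change (plus A B) with (A + B). change (plus C' D) with (C' + D). ring.
Qed.

Lemma Bd_splity g x0 x1 y0 y1 y2 :
  CEx (fun t => g (x0, t)) y0 y1 -> CEx (fun t => g (x0, t)) y1 y2 ->
  CEx (fun t => g (x1, t)) y0 y1 -> CEx (fun t => g (x1, t)) y1 y2 ->
  Bd g x0 x1 y0 y2 = Bd g x0 x1 y0 y1 + Bd g x0 x1 y1 y2.
Proof.
move=> H1 H2 H3 H4; rewrite /Bd /CI.
rewrite -(RInt_Chasles (V:=C_R_CompleteNormedModule) _ _ _ _ H1 H2).
rewrite -(RInt_Chasles (V:=C_R_CompleteNormedModule) _ _ _ _ H3 H4).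
set A := RInt _ y0 y1. set B := RInt _ y1 y2. set C' := RInt _ y0 y1.
set D := RInt _ y1 y2.
change (plus A B) with (A + B). change (plus C' D) with (C' + D). ring.
Qed.

Record rect := Rect { rx0 : R; rx1 : R; ry0 : R; ry1 : R }.

Definition inR (r : rect) (z : C) : Prop :=
  (rx0 r <= fst z <= rx1 r)%R /\ (ry0 r <= snd z <= ry1 r)%R.
Definition BdR g r := Bd g (rx0 r) (rx1 r) (ry0 r) (ry1 r).
Definition sub_rect (r' r : rect) : Prop :=
  (rx0 r <= rx0 r')%R /\ (rx0 r' <= rx1 r')%R /\ (rx1 r' <= rx1 r)%R /\
  (ry0 r <= ry0 r')%R /\ (ry0 r' <= ry1 r')%R /\ (ry1 r' <= ry1 r)%R.

Definition mx r := ((rx0 r + rx1 r) / 2)%R.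
Definition my r := ((ry0 r + ry1 r) / 2)%R.
Definition q0 r := Rect (rx0 r) (mx r) (ry0 r) (my r).
Definition q1 r := Rect (mx r) (rx1 r) (ry0 r) (my r).
Definition q2 r := Rect (rx0 r) (mx r) (my r) (ry1 r).
Definition q3 r := Rect (mx r) (rx1 r) (my r) (ry1 r).

Definition pick2 g (r1 r2 : rect) : rect :=
  if Rle_dec (Cmod (BdR g r1)) (Cmod (BdR g r2)) then r2 else r1.
Definition step g r := pick2 g (pick2 g (q0 r) (q1 r)) (pick2 g (q2 r) (q3 r)).

Lemma pick2_ge g r1 r2 : (Cmod (BdR g r1) <= Cmod (BdR g (pick2 g r1 r2)))%R /\
  (Cmod (BdR g r2) <= Cmod (BdR g (pick2 g r1 r2)))%R.
Proof. rewrite /pick2; case: Rle_dec => H /=; [split; lra| have := Rnot_le_lt _ _ H; split; lra]. Qed.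

Lemma pick2_cases g r1 r2 : pick2 g r1 r2 = r1 \/ pick2 g r1 r2 = r2.
Proof. rewrite /pick2; case: Rle_dec => /=; tauto. Qed.

Lemma step_cases g r : step g r = q0 r \/ step g r = q1 r \/ step g r = q2 r \/ step g r = q3 r.
Proof.
rewrite /step; case: (pick2_cases g (pick2 g (q0 r) (q1 r)) (pick2 g (q2 r) (q3 r))) => ->;
[case: (pick2_cases g (q0 r) (q1 r)) | case: (pick2_cases g (q2 r) (q3 r))] => ->; tauto.
Qed.

Lemma step_ge g r : (Cmod (BdR g (q0 r)) + Cmod (BdR g (q1 r)) + Cmod (BdR g (q2 r)) + Cmod (BdR g (q3 r))
   <= 4 * Cmod (BdR g (step g r)))%R.
Proof.
rewrite /step.
have [A1 A2] := pick2_ge g (q0 r) (q1 r).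
have [B1 B2] := pick2_ge g (q2 r) (q3 r).
have [C1 C2] := pick2_ge g (pick2 g (q0 r) (q1 r)) (pick2 g (q2 r) (q3 r)).
lra.
Qed.

Lemma step_props g r : (rx0 r <= rx1 r)%R -> (ry0 r <= ry1 r)%R ->
  let r' := step g r in
  sub_rect r' r /\ (rx1 r' - rx0 r' = (rx1 r - rx0 r) / 2)%R /\ (ry1 r' - ry0 r' = (ry1 r - ry0 r) / 2)%R.
Proof.
move=> Hx Hy /=.
case: (step_cases g r) => [->|[->|[->|->]]];
rewrite /sub_rect /q0 /q1 /q2 /q3 /mx /my /=; repeat split; lra.
Qed.

Definition cont_on g r := forall z, inR r z -> Ccont g z.

Lemma EI_sub g r r' : cont_on g r -> sub_rect r' r -> EI g (rx0 r') (rx1 r') (ry0 r') (ry1 r').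
Proof.
move=> Hc [H1 [H2 [H3 [H4 [H5 H6]]]]].
apply EI_of_cont => // z Hz; apply Hc.
rewrite /inR; case: Hz => [[Ha [Hb|Hb]]|[Ha [Hb|Hb]]]; rewrite ?Hb; lra.
Qed.

Lemma CEx_h g r y a b : cont_on g r -> (rx0 r <= a)%R -> (a <= b)%R -> (b <= rx1 r)%R ->
  (ry0 r <= y <= ry1 r)%R -> CEx (fun t => g (t, y)) a b.
Proof.
move=> Hc Ha Hab Hb Hy.
apply: (@CEx_path g (fun t => (t, y))) => //; first exact: path_h.
move=> t Ht; apply Hc; rewrite /inR /=; lra.
Qed.

Lemma CEx_v g r x a b : cont_on g r -> (ry0 r <= a)%R -> (a <= b)%R -> (b <= ry1 r)%R ->
  (rx0 r <= x <= rx1 r)%R -> CEx (fun t => g (x, t)) a b.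
Proof.
move=> Hc Ha Hab Hb Hx.
apply: (@CEx_path g (fun t => (x, t))) => //; first exact: path_v.
move=> t Ht; apply Hc; rewrite /inR /=; lra.
Qed.

Lemma BdR_quads g r : (rx0 r <= rx1 r)%R -> (ry0 r <= ry1 r)%R -> cont_on g r ->
  BdR g r = BdR g (q0 r) + BdR g (q1 r) + BdR g (q2 r) + BdR g (q3 r).
Proof.
move=> Hx Hy Hc.
rewrite /BdR /q0 /q1 /q2 /q3 /mx /my /=.
set m1 := ((rx0 r + rx1 r) / 2)%R. set m2 := ((ry0 r + ry1 r) / 2)%R.
have Hm1 : (rx0 r <= m1 <= rx1 r)%R by rewrite /m1; lra.
have Hm2 : (ry0 r <= m2 <= ry1 r)%R by rewrite /m2; lra.
rewrite (@Bd_splity g (rx0 r) (rx1 r) (ry0 r) m2 (ry1 r)); try (apply: CEx_v; eauto; lra).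
rewrite (@Bd_splitx g (rx0 r) m1 (rx1 r) (ry0 r) m2); try (apply: CEx_h; eauto; lra).
rewrite (@Bd_splitx g (rx0 r) m1 (rx1 r) m2 (ry1 r)); try (apply: CEx_h; eauto; lra).
ring.
Qed.

Lemma Cmod_le_abs (z : C) : (Cmod z <= Rabs (fst z) + Rabs (snd z))%R.
Proof.
case: z => a b; rewrite /Cmod; cbn [fst snd].
have Ha := Rabs_pos a; have Hb := Rabs_pos b.
rewrite -(sqrt_square (Rabs a + Rabs b)); last lra.
apply sqrt_le_1_alt.
have E1 : (a ^ 2 = Rabs a * Rabs a)%R by rewrite -pow2_abs /=; ring.
have E2 : (b ^ 2 = Rabs b * Rabs b)%R by rewrite -pow2_abs /=; ring.
rewrite E1 E2; nra.
Qed.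

Fixpoint sq g r m := match m with O => r | S k => step g (sq g r k) end.

Lemma sub_rect_trans r1 r2 r3 : sub_rect r1 r2 -> sub_rect r2 r3 -> sub_rect r1 r3.
Proof. rewrite /sub_rect; lra. Qed.

Lemma sub_rect_refl r : (rx0 r <= rx1 r)%R -> (ry0 r <= ry1 r)%R -> sub_rect r r.
Proof. rewrite /sub_rect; lra. Qed.

Lemma cont_on_sub g r r' : cont_on g r -> sub_rect r' r -> cont_on g r'.
Proof. move=> Hc Hs z Hz; apply Hc; move: Hs Hz; rewrite /sub_rect /inR; lra. Qed.

Lemma BdR_le4 g r : (rx0 r <= rx1 r)%R -> (ry0 r <= ry1 r)%R -> cont_on g r ->
  (Cmod (BdR g r) <= 4 * Cmod (BdR g (step g r)))%R.
Proof.
move=> Hx Hy Hc; rewrite (BdR_quads Hx Hy Hc).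
apply: Rle_trans; last apply step_ge.
have := Cmod_triangle (BdR g (q0 r) + BdR g (q1 r) + BdR g (q2 r)) (BdR g (q3 r)).
have := Cmod_triangle (BdR g (q0 r) + BdR g (q1 r)) (BdR g (q2 r)).
have := Cmod_triangle (BdR g (q0 r)) (BdR g (q1 r)).
lra.
Qed.

Lemma sq_props g r m : (rx0 r <= rx1 r)%R -> (ry0 r <= ry1 r)%R -> cont_on g r ->
  sub_rect (sq g r m) r /\
  (rx1 (sq g r m) - rx0 (sq g r m) = (rx1 r - rx0 r) * (/2) ^ m)%R /\
  (ry1 (sq g r m) - ry0 (sq g r m) = (ry1 r - ry0 r) * (/2) ^ m)%R /\
  (Cmod (BdR g r) * ((/2) ^ m * (/2) ^ m) <= Cmod (BdR g (sq g r m)))%R.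
Proof.
move=> Hx Hy Hc; elim: m => [|m [IH1 [IH2 [IH3 IH4]]]] /=.
  split; first exact: sub_rect_refl. split; first ring. split; first ring. lra.
have Hx' : (rx0 (sq g r m) <= rx1 (sq g r m))%R by move: IH1; rewrite /sub_rect; lra.
have Hy' : (ry0 (sq g r m) <= ry1 (sq g r m))%R by move: IH1; rewrite /sub_rect; lra.
have [S1 [S2 S3]] := step_props g (sq g r m) Hx' Hy'.
split; first exact: sub_rect_trans S1 IH1.
split; first by rewrite S2 IH2; field.
split; first by rewrite S3 IH3; field.
have H4 := BdR_le4 Hx' Hy' (cont_on_sub Hc IH1).
have Hp : (0 <= (/2) ^ m)%R by apply pow_le; lra.
nra.
Qed.

Lemma sq_step g r m : (rx0 r <= rx1 r)%R -> (ry0 r <= ry1 r)%R -> cont_on g r ->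
  sub_rect (sq g r m.+1) (sq g r m).
Proof.
move=> Hx Hy Hc; have [IH1 _] := sq_props m Hx Hy Hc.
have Hx' : (rx0 (sq g r m) <= rx1 (sq g r m))%R by move: IH1; rewrite /sub_rect; lra.
have Hy' : (ry0 (sq g r m) <= ry1 (sq g r m))%R by move: IH1; rewrite /sub_rect; lra.
have [S1 _] := step_props g (sq g r m) Hx' Hy'. exact S1.
Qed.

Lemma sq_mono g r k m : (rx0 r <= rx1 r)%R -> (ry0 r <= ry1 r)%R -> cont_on g r ->
  (k <= m)%N -> sub_rect (sq g r m) (sq g r k).
Proof.
move=> Hx Hy Hc; elim: m => [|m IH].
  rewrite leqn0 => /eqP ->. have [H1 _] := sq_props 0 Hx Hy Hc.
  apply sub_rect_refl; move: H1; rewrite /sub_rect; lra.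
rewrite leq_eqVlt => /orP [/eqP ->|Hk].
  have [H1 _] := sq_props m.+1 Hx Hy Hc.
  apply sub_rect_refl; move: H1; rewrite /sub_rect; lra.
apply: sub_rect_trans (IH Hk). exact: sq_step.
Qed.

Lemma sq_cross g r k m : (rx0 r <= rx1 r)%R -> (ry0 r <= ry1 r)%R -> cont_on g r ->
  (rx0 (sq g r k) <= rx1 (sq g r m))%R /\ (ry0 (sq g r k) <= ry1 (sq g r m))%R.
Proof.
move=> Hx Hy Hc.
case: (leqP k m) => H.
  have := @sq_mono g r k m Hx Hy Hc H; rewrite /sub_rect; lra.
have := @sq_mono g r m k Hx Hy Hc (ltnW H); rewrite /sub_rect; lra.
Qed.

Lemma nested_point g r : (rx0 r <= rx1 r)%R -> (ry0 r <= ry1 r)%R -> cont_on g r ->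
  exists q : C, forall m, inR (sq g r m) q.
Proof.
move=> Hx Hy Hc.
have Bx : bound (fun x => exists k, x = rx0 (sq g r k)).
  exists (rx1 r) => x [k ->]; have := sq_cross k 0%N Hx Hy Hc; simpl; lra.
have By : bound (fun x => exists k, x = ry0 (sq g r k)).
  exists (ry1 r) => x [k ->]; have := sq_cross k 0%N Hx Hy Hc; simpl; lra.
have [qx [Ux Lx]] := completeness _ Bx (ex_intro _ (rx0 r) (ex_intro _ 0%N erefl)).
have [qy [Uy Ly]] := completeness _ By (ex_intro _ (ry0 r) (ex_intro _ 0%N erefl)).
exists (qx, qy) => m; rewrite /inR /=; split; split.
- apply Ux; by exists m.
- apply Lx => x [k ->]; have := sq_cross k m Hx Hy Hc; lra.
- apply Uy; by exists m.
- apply Ly => x [k ->]; have := sq_cross k m Hx Hy Hc; lra.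
Qed.

Lemma Cmod_small_0 (c : C) K : (0 <= K)%R ->
  (forall eps, (0 < eps)%R -> (Cmod c <= eps * K)%R) -> c = 0.
Proof.
move=> HK H; apply Cmod_eq_0.
have H0 := Cmod_ge_0 c.
case: (Req_dec (Cmod c) 0) => // Hn.
have Hp : (0 < Cmod c)%R by lra.
have := H (Cmod c / (2 * (K + 1)))%R ltac:(apply Rdiv_lt_0_compat; lra).
have -> : (Cmod c / (2 * (K + 1)) * K = Cmod c * (K / (2 * (K + 1))))%R by field; lra.
have : (K / (2 * (K + 1)) < 1)%R.
  apply (Rmult_lt_reg_r (2 * (K + 1))); first lra.
  rewrite /Rdiv Rmult_assoc Rinv_l; lra.
nra.
Qed.

Lemma Dexp_affine A B q : Dexp (fun z => A + B * z) q B.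
Proof.
have := Dexp_plus (Dexp_const A q) (Dexp_scal B (Dexp_id q)).
by have -> : 0 + B * 1 = B by ring.
Qed.

Lemma goursat g r : (rx0 r <= rx1 r)%R -> (ry0 r <= ry1 r)%R ->
  (forall z, inR r z -> Cdiff g z) -> BdR g r = 0.
Proof.
move=> Hx Hy Hd.
have Hc : cont_on g r by move=> z Hz; apply Cdiff_cont, Hd.
have [q Hq] := nested_point Hx Hy Hc.
have Hqr := Hq 0%N.
set w := (rx1 r - rx0 r)%R. set h := (ry1 r - ry0 r)%R.
have Hw : (0 <= w)%R by rewrite /w; lra.
have Hh : (0 <= h)%R by rewrite /h; lra.
apply (@Cmod_small_0 _ (2 * ((w + h) * (w + h)))%R); first nra.
move=> eps He.
have [L HL] := Hd q Hqr.
have [del [Hdel Hdel']] := HL eps He.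
have [N HN] := pow_lt_1_zero (/2) ltac:(rewrite Rabs_pos_eq; lra) (del / (w + h + 1))
   ltac:(apply Rdiv_lt_0_compat; lra).
have HsN := HN N (Nat.le_refl N).
set s := ((/2) ^ N)%R in HsN *.
have Hs : (0 < s)%R by apply pow_lt; lra.
rewrite Rabs_pos_eq in HsN; last lra.
have Hws : ((w + h) * s < del)%R.
  have : ((w + h + 1) * s < del)%R.
    apply (Rmult_lt_reg_r (/ (w + h + 1))); first (apply Rinv_0_lt_compat; lra).
    rewrite (Rmult_comm (w+h+1)) Rmult_assoc Rinv_r; lra.
  nra.
have [S1 [S2 [S3 S4]]] := sq_props N Hx Hy Hc.
set rm := sq g r N in S1 S2 S3 S4.
have Hqm := Hq N.
have Hclose : forall z, inR rm z -> (Cmod (z - q) <= (w + h) * s)%R.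
  move=> z Hz. apply: Rle_trans; first apply Cmod_le_abs.
  move: Hz Hqm S2 S3; rewrite /inR -/s -/w -/h => Hz Hqm' S2' S3'.
  have E1 : (Rabs (fst ((z - q)%C)) <= w * s)%R by apply Rabs_le; simpl; rewrite /rm in Hz S2' S3'; lra.
  have E2 : (Rabs (snd ((z - q)%C)) <= h * s)%R by apply Rabs_le; simpl; rewrite /rm in Hz S2' S3'; lra.
  lra.
set l := fun z => (g q - L * q) + L * z.
have EIg : EI g (rx0 rm) (rx1 rm) (ry0 rm) (ry1 rm) by apply: EI_sub Hc S1.
have EIl : EI l (rx0 rm) (rx1 rm) (ry0 rm) (ry1 rm).
  apply EI_of_cont; [move: S1; rewrite /sub_rect; lra|move: S1; rewrite /sub_rect; lra|].
  move=> z _; apply Cdiff_cont; exists L; exact: Dexp_affine.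
have E : BdR g rm = Bd (fun z => g z - l z) (rx0 rm) (rx1 rm) (ry0 rm) (ry1 rm).
  rewrite (Bd_minus EIg EIl) /l Bd_lin /BdR; ring.
have B := @Bd_bound (fun z => g z - l z) (rx0 rm) (rx1 rm) (ry0 rm) (ry1 rm) (eps * ((w + h) * s))%R
  ltac:(move: S1; rewrite /sub_rect; lra) ltac:(move: S1; rewrite /sub_rect; lra) (EI_minus EIg EIl).
have Hz : forall z, onBd (rx0 rm) (rx1 rm) (ry0 rm) (ry1 rm) z -> (Cmod (g z - l z) <= eps * ((w + h) * s))%R.
  move=> z Hz.
  have Hin : inR rm z.
    move: S1 Hz; rewrite /sub_rect /inR /onBd; case: z => zx zy /=.
    move=> S1 [[Ha [Hb|Hb]]|[Ha [Hb|Hb]]]; rewrite Hb; lra.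
  have Hzq := Hclose z Hin.
  have := Hdel' z ltac:(lra).
  have -> : g z - l z = g z - g q - L * (z - q) by rewrite /l; ring.
  move=> X; apply: Rle_trans X _; apply Rmult_le_compat_l; lra.
have B' := B Hz.
rewrite -E S2 S3 -/w -/h in B'.
have X : (Cmod (BdR g r) * (s * s) <= eps * (2 * ((w + h) * (w + h))) * (s * s))%R.
  apply: Rle_trans; first exact S4.
  apply: Rle_trans; first exact B'.
  rewrite -/s; nra.
apply (Rmult_le_reg_r (s * s)); first nra. exact X.
Qed.

Lemma neq_fst (z p : C) : fst z <> fst p -> z <> p.
Proof. by move=> H E; apply H; rewrite E. Qed.
Lemma neq_snd (z p : C) : snd z <> snd p -> z <> p.
Proof. by move=> H E; apply H; rewrite E. Qed.

Ltac solve_or := first [left; lra|right; lra].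

Lemma cauchy_pt g x0 x3 y0 y3 (p : C) :
  (x0 < fst p < x3)%R -> (y0 < snd p < y3)%R ->
  (forall z, inR (Rect x0 x3 y0 y3) z -> z <> p -> Cdiff g z) ->
  (exists M d, (0 < d)%R /\ forall z, (Cmod (z - p) < d)%R -> (Cmod (g z) <= M)%R) ->
  Bd g x0 x3 y0 y3 = 0.
Proof.
move=> Hpx Hpy Hd [M [d [Hd0 HM]]].
have Hc : forall z, inR (Rect x0 x3 y0 y3) z -> z <> p -> Ccont g z.
  by move=> z Hz Hn; apply Cdiff_cont, Hd.
set px := fst p in Hpx *. set py := snd p in Hpy *.
have CEh : forall y a b, (y0 <= y <= y3)%R -> y <> py -> (x0 <= a)%R -> (a <= b)%R -> (b <= x3)%R ->
    CEx (fun t => g (t, y)) a b.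
  move=> y a b Hy Hyp Ha Hab Hb.
  apply: (@CEx_path g (fun t => (t, y))) => //; first exact: path_h.
  move=> t Ht; apply Hc; first (rewrite /inR /=; lra). by apply neq_snd.
have CEv : forall x a b, (x0 <= x <= x3)%R -> x <> px -> (y0 <= a)%R -> (a <= b)%R -> (b <= y3)%R ->
    CEx (fun t => g (x, t)) a b.
  move=> x a b Hx Hxp Ha Hab Hb.
  apply: (@CEx_path g (fun t => (x, t))) => //; first exact: path_v.
  move=> t Ht; apply Hc; first (rewrite /inR /=; lra). by apply neq_fst.
apply (@Cmod_small_0 _ (8 * Rabs M)%R); first by have := Rabs_pos M; lra.
move=> eps He.
set del := Rmin (Rmin eps (d / 4)) (Rmin (Rmin ((px - x0) / 2) ((x3 - px) / 2))
                                         (Rmin ((py - y0) / 2) ((y3 - py) / 2)))%R.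
have Hdel0 : (0 < del)%R.
  rewrite /del; repeat apply min_pos; lra.
have D1 : (del <= eps)%R := Rle_trans _ _ _ (Rmin_l _ _) (Rmin_l _ _).
have D2 : (del <= d / 4)%R := Rle_trans _ _ _ (Rmin_l _ _) (Rmin_r _ _).
have D3 : (del <= (px - x0) / 2)%R :=
  Rle_trans _ _ _ (Rmin_r _ _) (Rle_trans _ _ _ (Rmin_l _ _) (Rmin_l _ _)).
have D4 : (del <= (x3 - px) / 2)%R :=
  Rle_trans _ _ _ (Rmin_r _ _) (Rle_trans _ _ _ (Rmin_l _ _) (Rmin_r _ _)).
have D5 : (del <= (py - y0) / 2)%R :=
  Rle_trans _ _ _ (Rmin_r _ _) (Rle_trans _ _ _ (Rmin_r _ _) (Rmin_l _ _)).
have D6 : (del <= (y3 - py) / 2)%R :=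
  Rle_trans _ _ _ (Rmin_r _ _) (Rle_trans _ _ _ (Rmin_r _ _) (Rmin_r _ _)).
set x1 := (px - del)%R. set x2 := (px + del)%R. set y1 := (py - del)%R. set y2 := (py + del)%R.
have Hneq : forall a : R, (a < px \/ px < a)%R -> a <> px by move=> a Ha E; lra.
have Hneqy : forall a : R, (a < py \/ py < a)%R -> a <> py by move=> a Ha E; lra.
rewrite (@Bd_splitx g x0 x1 x3 y0 y3); try (apply CEh; [lra|apply Hneqy; rewrite ?/x1 ?/x2 ?/y1 ?/y2; first [left; lra|right; lra]|rewrite /x1; lra|rewrite /x1; lra|rewrite /x1; lra]).
rewrite (@Bd_splitx g x1 x2 x3 y0 y3); try (apply CEh; [lra|apply Hneqy; rewrite ?/x1 ?/x2 ?/y1 ?/y2; first [left; lra|right; lra]|rewrite /x1 /x2; lra|rewrite /x1 /x2; lra|rewrite /x1 /x2; lra]).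
rewrite (@Bd_splity g x1 x2 y0 y1 y3); try (apply CEv; [rewrite /x1 /x2; lra|apply Hneq; rewrite ?/x1 ?/x2 ?/y1 ?/y2; first [left; lra|right; lra]|rewrite /y1; lra|rewrite /y1; lra|rewrite /y1; lra]).
rewrite (@Bd_splity g x1 x2 y1 y2 y3); try (apply CEv; [rewrite /x1 /x2; lra|apply Hneq; rewrite ?/x1 ?/x2 ?/y1 ?/y2; first [left; lra|right; lra]|rewrite /y1 /y2; lra|rewrite /y1 /y2; lra|rewrite /y1 /y2; lra]).
have G1 : Bd g x0 x1 y0 y3 = 0.
  apply: (@goursat g (Rect x0 x1 y0 y3)); rewrite /= /x1; try lra.
  move=> z Hz; apply Hd; first (move: Hz; rewrite /inR /=; lra).
  apply neq_fst; apply Hneq; move: Hz; rewrite /inR /= ?/x1 ?/x2 ?/y1 ?/y2 => Hz; first [left; lra|right; lra].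
have G2 : Bd g x2 x3 y0 y3 = 0.
  apply: (@goursat g (Rect x2 x3 y0 y3)); rewrite /= /x2; try lra.
  move=> z Hz; apply Hd; first (move: Hz; rewrite /inR /=; lra).
  apply neq_fst; apply Hneq; move: Hz; rewrite /inR /= ?/x1 ?/x2 ?/y1 ?/y2 => Hz; first [left; lra|right; lra].
have G3 : Bd g x1 x2 y0 y1 = 0.
  apply: (@goursat g (Rect x1 x2 y0 y1)); rewrite /= /x1 /x2 /y1; try lra.
  move=> z Hz; apply Hd; first (move: Hz; rewrite /inR /=; lra).
  apply neq_snd; apply Hneqy; move: Hz; rewrite /inR /= ?/x1 ?/x2 ?/y1 ?/y2 => Hz; first [left; lra|right; lra].
have G4 : Bd g x1 x2 y2 y3 = 0.
  apply: (@goursat g (Rect x1 x2 y2 y3)); rewrite /= /x1 /x2 /y2; try lra.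
  move=> z Hz; apply Hd; first (move: Hz; rewrite /inR /=; lra).
  apply neq_snd; apply Hneqy; move: Hz; rewrite /inR /= ?/x1 ?/x2 ?/y1 ?/y2 => Hz; first [left; lra|right; lra].
rewrite G1 G2 G3 G4.
have HEI : EI g x1 x2 y1 y2.
  apply EI_of_cont; rewrite /x1 /x2 /y1 /y2; try lra.
  move=> z Hz; apply Hc.
    move: Hz; rewrite /onBd /inR /=; case: z => zx zy /=.
    case=> [[Ha [Hb|Hb]]|[Ha [Hb|Hb]]]; rewrite Hb; lra.
  move: Hz; rewrite /onBd; case: z => zx zy /=.
  case=> [[Ha [Hb|Hb]]|[Ha [Hb|Hb]]]; rewrite Hb.
  - apply neq_snd => /= E; rewrite -/py in E; lra.
  - apply neq_snd => /= E; rewrite -/py in E; lra.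
  - apply neq_fst => /= E; rewrite -/px in E; lra.
  - apply neq_fst => /= E; rewrite -/px in E; lra.
have B := @Bd_bound g x1 x2 y1 y2 (Rabs M) ltac:(rewrite /x1 /x2; lra) ltac:(rewrite /y1 /y2; lra) HEI.
have B' : (Cmod (Bd g x1 x2 y1 y2) <= 2 * (x2 - x1 + (y2 - y1)) * Rabs M)%R.
  apply B => z Hz.
  apply: Rle_trans; last apply Rle_abs.
  apply HM.
  apply: Rle_lt_trans; first apply Cmod_le_abs.
  move: Hz; rewrite /onBd /x1 /x2 /y1 /y2; case: z => zx zy /=; rewrite -/px -/py.
  have HA : forall a b : R, (Rabs a <= del)%R -> (Rabs b <= del)%R -> (Rabs a + Rabs b < d)%R by move=> ? ? ? ?; lra.
  case=> [[Ha [Hb|Hb]]|[Ha [Hb|Hb]]]; rewrite Hb; apply HA; apply Rabs_le; lra.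
have -> : 0 + (0 + (Bd g x1 x2 y1 y2 + 0) + 0) = Bd g x1 x2 y1 y2 by ring.
apply: Rle_trans B' _.
rewrite /x1 /x2 /y1 /y2.
have := Rabs_pos M. nra.
Qed.

Lemma Cdiff_ext f g q : (forall z, f z = g z) -> Cdiff f q -> Cdiff g q.
Proof. by move=> H; rewrite (functional_extensionality f g H). Qed.

Lemma Cdiff_sub_const h c q : Cdiff h q -> Cdiff (fun z => h z - c) q.
Proof.
move=> [L HL]; apply: (Cdiff_ext (f := fun z => h z + (fun _ => - c) z)) => //.
exists (L + 0); apply Dexp_plus => //; apply Dexp_const.
Qed.

Lemma Cdiff_mul f g q : Cdiff f q -> Cdiff g q -> Cdiff (fun z => f z * g z) q.
Proof. move=> [L1 H1] [L2 H2]; eexists; apply Dexp_mult; eauto. Qed.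

Lemma Cdiff_inv f q : Cdiff f q -> f q <> 0 -> Cdiff (fun z => / f z) q.
Proof. move=> [L1 H1] Hq; eexists; apply Dexp_inv; eauto. Qed.

Lemma Cdiff_idsub p q : Cdiff (fun z => z - p) q.
Proof. apply Cdiff_sub_const; exists 1; apply Dexp_id. Qed.

Lemma Cdiff_kp p q : q <> p -> Cdiff (fun z => / (z - p)) q.
Proof.
move=> H; apply: (Cdiff_inv (f := fun z => z - p)); first exact: Cdiff_idsub.
move=> E; apply H. have -> : q = (q - p) + p by ring. rewrite E; ring.
Qed.

Lemma Cdiff_gp h p q : Cdiff h q -> q <> p -> Cdiff (fun z => (h z - h p) * / (z - p)) q.
Proof.
move=> Hh Hq; apply: (Cdiff_mul (f := fun z => h z - h p) (g := fun z => / (z - p))).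
  exact: Cdiff_sub_const. exact: Cdiff_kp.
Qed.

Lemma gp_bounded h p : Cdiff h p ->
  exists M d, (0 < d)%R /\ forall z, (Cmod (z - p) < d)%R -> (Cmod ((h z - h p) * / (z - p)) <= M)%R.
Proof.
move=> [L HL]; have [d [Hd H]] := HL 1%R Rlt_0_1.
exists (Cmod L + 1)%R, d; split => // z Hz.
have HL0 := Cmod_ge_0 L.
case: (Ceq_dec z p) => [->|Hn].
  have -> : h p - h p = 0 by ring. rewrite Cmult_0_l Cmod_0; lra.
have Hnz : z - p <> 0.
  move=> E; apply Hn. have -> : z = (z - p) + p by ring. rewrite E; ring.
have Hm : (0 < Cmod (z - p))%R by apply Cmod_gt_0.
have E := H z Hz.
rewrite Cmod_mult Cmod_inv //.
have : (Cmod (h z - h p) <= (Cmod L + 1) * Cmod (z - p))%R.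
  have -> : h z - h p = (h z - h p - L * (z - p)) + L * (z - p) by ring.
  apply: Rle_trans; first apply Cmod_triangle. rewrite Cmod_mult; lra.
move=> X.
apply (Rmult_le_reg_r (Cmod (z - p))) => //.
rewrite Rmult_assoc Rinv_l; lra.
Qed.

Lemma real_lb (f : R -> R) a b I c : (a <= b)%R -> is_RInt f a b I ->
  (forall t, (a <= t <= b)%R -> (c <= f t)%R) -> ((b - a) * c <= I)%R.
Proof.
move=> Hab HI Hc.
have Hex : ex_RInt f a b by exists I.
have := RInt_le (fun _ => c) f a b Hab (ex_RInt_const _ _ _) Hex (fun t Ht => Hc t ltac:(lra)).
rewrite RInt_const (is_RInt_unique f a b I HI) /scal /= /mult /=. lra.
Qed.

Lemma frac_lb r s v D : (0 < r)%R -> (Rabs s <= r)%R -> v = r -> D = (s * s + r * r)%R ->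
  (1 / (2 * r) <= v / D)%R.
Proof.
move=> Hr Hs -> ->.
have Hs2 : (s * s <= r * r)%R.
  have := Rabs_pos s. have E : (s * s = Rabs s * Rabs s)%R by rewrite -Rabs_mult Rabs_pos_eq; nra.
  rewrite E; nra.
have HD : (0 < s * s + r * r)%R by nra.
apply (Rmult_le_reg_r (2 * r * (s * s + r * r))); first nra.
have -> : (1 / (2 * r) * (2 * r * (s * s + r * r)) = s * s + r * r)%R by field; lra.
have -> : (r / (s * s + r * r) * (2 * r * (s * s + r * r)) = 2 * r * r)%R by field; lra.
lra.
Qed.

Lemma snd_le_Cmod (c : C) : (snd c <= Cmod c)%R.
Proof. have := Rmax_Cmod c; have := Rmax_r (Rabs (fst c)) (Rabs (snd c)); have := Rle_abs (snd c); lra. Qed.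

Lemma snd_combo (X Y Z W : C) : snd (X + Ci * Y - Z - Ci * W) = (snd X + fst Y - snd Z - fst W)%R.
Proof. case: X => ? ?; case: Y => ? ?; case: Z => ? ?; case: W => ? ? /=; ring. Qed.

Lemma CI_fst f a b : CEx f a b -> is_RInt (fun t => fst (f t)) a b (fst (CI f a b)).
Proof. move=> H; apply: is_RInt_fct_extend_fst; exact: CI_correct. Qed.
Lemma CI_snd f a b : CEx f a b -> is_RInt (fun t => snd (f t)) a b (snd (CI f a b)).
Proof. move=> H; apply: is_RInt_fct_extend_snd; exact: CI_correct. Qed.

Lemma J_lower (a : C) r : (0 < r)%R ->
  4 <= Cmod (Bd (fun z => / (z - a)) (fst a - r)%R (fst a + r)%R (snd a - r)%R (snd a + r)%R).
Proof.
move=> Hr.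
have Hc : forall z, onBd (fst a - r)%R (fst a + r)%R (snd a - r)%R (snd a + r)%R z -> Ccont (fun z => / (z - a)) z.
  move=> z Hz; apply Cdiff_cont, Cdiff_kp => E; move: Hz; rewrite E /onBd; case=> [[H1 [H2|H2]]|[H1 [H2|H2]]]; lra.
have [E1 [E2 [E3 E4]]] := @EI_of_cont _ (fst a - r)%R (fst a + r)%R (snd a - r)%R (snd a + r)%R ltac:(lra) ltac:(lra) Hc.
rewrite /Bd.
apply: Rle_trans; last apply snd_le_Cmod. rewrite snd_combo.
have Hx : (fst a - r <= fst a + r)%R by lra.
have Hy : (snd a - r <= snd a + r)%R by lra.
have LB := real_lb (c := (1 / (2 * r))%R) Hx (CI_snd E1).
have LR := real_lb (c := (1 / (2 * r))%R) Hy (CI_fst E4).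
have LT := real_lb (c := (1 / (2 * r))%R) Hx (is_RInt_opp _ _ _ _ (CI_snd E2)).
have LL := real_lb (c := (1 / (2 * r))%R) Hy (is_RInt_opp _ _ _ _ (CI_fst E3)).
have X : ((snd a + r - (snd a - r)) * (1 / (2 * r)) = 1)%R by field; lra.
have X' : ((fst a + r - (fst a - r)) * (1 / (2 * r)) = 1)%R by field; lra.
rewrite ?X ?X' in LB LR LT LL.
have HB : 1 <= snd (CI (fun t => / ((t, (snd a - r)%R) - a)) (fst a - r)%R (fst a + r)%R).
  apply LB => t Ht; simpl. apply (frac_lb (s := (t - fst a)%R)) => //. apply Rabs_le; lra. ring. ring.
have HR : 1 <= fst (CI (fun t => / (((fst a + r)%R, t) - a)) (snd a - r)%R (snd a + r)%R).
  apply LR => t Ht; simpl. apply (frac_lb (s := (t - snd a)%R)) => //. apply Rabs_le; lra. ring. ring.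
have HT : 1 <= Ropp (snd (CI (fun t => / ((t, (snd a + r)%R) - a)) (fst a - r)%R (fst a + r)%R)).
  apply LT => t Ht; simpl. rewrite /opp /= -Ropp_div. apply (frac_lb (s := (t - fst a)%R)) => //. apply Rabs_le; lra. ring. ring.
have HL : 1 <= Ropp (fst (CI (fun t => / (((fst a - r)%R, t) - a)) (snd a - r)%R (snd a + r)%R)).
  apply LL => t Ht; simpl. rewrite /opp /= -Ropp_div. apply (frac_lb (s := (t - snd a)%R)) => //. apply Rabs_le; lra. ring. ring.
lra.
Qed.


Lemma abs_fst_le (c : C) : (Rabs (fst c) <= Cmod c)%R.
Proof. have := Rmax_Cmod c; have := Rmax_l (Rabs (fst c)) (Rabs (snd c)); lra. Qed.
Lemma abs_snd_le (c : C) : (Rabs (snd c) <= Cmod c)%R.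
Proof. have := Rmax_Cmod c; have := Rmax_r (Rabs (fst c)) (Rabs (snd c)); lra. Qed.

Lemma Cmod_rev_tri (x y : C) : (Cmod x - Cmod y <= Cmod (x - y))%R.
Proof. have := Cmod_triangle (x - y) y. have -> : x - y + y = x by ring. lra. Qed.

Lemma sub_neq0 (z p : C) : z <> p -> z - p <> 0.
Proof. move=> H E; apply H; have -> : z = (z - p) + p by ring. rewrite E; ring. Qed.

Lemma kdiff (z a b : C) : z <> a -> z <> b ->
  / (z - b) - / (z - a) = (b - a) * / ((z - b) * (z - a)).
Proof. move=> Ha Hb; field; split; apply sub_neq0 => //. Qed.

Lemma est h M a b :
  (forall w, in_disk w -> Cdiff h w) -> (forall w, in_disk w -> (Cmod (h w) <= M)%R) ->
  in_disk a -> (Cmod (b - a) <= (1 - Cmod a) / 256)%R -> (Cmod (h b - h a) <= M / 4)%R.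
Proof.
move=> Hd HM Ha Hb.
rewrite /in_disk in Ha.
set r := ((1 - Cmod a) / 4)%R.
have Hr : (0 < r)%R by rewrite /r; lra.
set e := Cmod (b - a).
have He : (e <= r / 64)%R by rewrite /e /r; lra.
have He0 : (0 <= e)%R by apply Cmod_ge_0.
have HM0 : (0 <= M)%R by have := HM a Ha; have := Cmod_ge_0 (h a); lra.
set x0 := (fst a - r)%R. set x1 := (fst a + r)%R. set y0 := (snd a - r)%R. set y1 := (snd a + r)%R.
have Hdisk : forall z, inR (Rect x0 x1 y0 y1) z -> in_disk z.
  move=> z; rewrite /inR /= /x0 /x1 /y0 /y1 => Hz.
  have H1 : (Cmod (z - a) <= 2 * r)%R.
    apply: Rle_trans; first apply Cmod_le_abs.
    have E1 : (Rabs (fst ((z - a)%C)) <= r)%R by apply Rabs_le; simpl; lra.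
    have E2 : (Rabs (snd ((z - a)%C)) <= r)%R by apply Rabs_le; simpl; lra.
    lra.
  have := Cmod_triangle a (z - a). have -> : a + (z - a) = z by ring.
  rewrite /in_disk /r in H1 *; lra.
have Hbf := abs_fst_le (b - a). have Hbs := abs_snd_le (b - a).
rewrite -/e in Hbf Hbs.
have Hbx : (x0 < fst b < x1)%R.
  move: Hbf; rewrite /x0 /x1 /=; move/Rabs_le_between => ?; lra.
have Hby : (y0 < snd b < y1)%R.
  move: Hbs; rewrite /y0 /y1 /=; move/Rabs_le_between => ?; lra.
have Hax : (x0 < fst a < x1)%R by rewrite /x0 /x1; lra.
have Hay : (y0 < snd a < y1)%R by rewrite /y0 /y1; lra.
have Hfar : forall z, onBd x0 x1 y0 y1 z -> (r <= Cmod (z - a))%R /\ (r / 2 <= Cmod (z - b))%R.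
  move=> z Hz.
  have Hza : (r <= Cmod (z - a))%R.
    have F := abs_fst_le (z - a). have S := abs_snd_le (z - a).
    move: Hz F S; rewrite /onBd /x0 /x1 /y0 /y1 /=.
    case=> [[H1 [H2|H2]]|[H1 [H2|H2]]]; rewrite H2; move=> F S.
    - have : (Rabs (snd a - r + - snd a) = r)%R by rewrite (_ : (snd a - r + - snd a = - r)%R); [rewrite Rabs_Ropp Rabs_pos_eq; lra| ring].
      lra.
    - have : (Rabs (snd a + r + - snd a) = r)%R by rewrite (_ : (snd a + r + - snd a = r)%R); [rewrite Rabs_pos_eq; lra| ring].
      lra.
    - have : (Rabs (fst a - r + - fst a) = r)%R by rewrite (_ : (fst a - r + - fst a = - r)%R); [rewrite Rabs_Ropp Rabs_pos_eq; lra| ring].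
      lra.
    - have : (Rabs (fst a + r + - fst a) = r)%R by rewrite (_ : (fst a + r + - fst a = r)%R); [rewrite Rabs_pos_eq; lra| ring].
      lra.
  split => //.
  have := Cmod_rev_tri (z - a) (b - a). have -> : z - a - (b - a) = z - b by ring.
  rewrite -/e; lra.
have Hne : forall z, onBd x0 x1 y0 y1 z -> z <> a /\ z <> b.
  move=> z Hz; have [F1 F2] := Hfar z Hz; split => E.
  - move: F1; rewrite E; have -> : a - a = 0 by ring. rewrite Cmod_0; lra.
  - move: F2; rewrite E; have -> : b - b = 0 by ring. rewrite Cmod_0; lra.
have HonQ : forall z, onBd x0 x1 y0 y1 z -> inR (Rect x0 x1 y0 y1) z.
  move=> z; rewrite /onBd /inR /=; case=> [[H1 [H2|H2]]|[H1 [H2|H2]]]; rewrite H2; rewrite /x0 /x1 /y0 /y1 in H1 *; repeat split; lra.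
set ga := fun z => (h z - h a) * / (z - a).
set gb := fun z => (h z - h b) * / (z - b).
set ka := fun z => / (z - a).
set kb := fun z => / (z - b).
have Hbdisk : in_disk b by apply Hdisk; rewrite /inR /=; lra.
have Za : Bd ga x0 x1 y0 y1 = 0.
  apply: (@cauchy_pt ga x0 x1 y0 y1 a Hax Hay).
    move=> z Hz Hn; apply Cdiff_gp => //; apply Hd, Hdisk, Hz.
  exact: gp_bounded (Hd a Ha).
have Zb : Bd gb x0 x1 y0 y1 = 0.
  apply: (@cauchy_pt gb x0 x1 y0 y1 b Hbx Hby).
    move=> z Hz Hn; apply Cdiff_gp => //; apply Hd, Hdisk, Hz.
  exact: gp_bounded (Hd b Hbdisk).
have Hxx : (x0 <= x1)%R by rewrite /x0 /x1; lra.
have Hyy : (y0 <= y1)%R by rewrite /y0 /y1; lra.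
have EIga : EI ga x0 x1 y0 y1.
  apply EI_of_cont => // z Hz; apply Cdiff_cont, Cdiff_gp; [apply Hd, Hdisk, HonQ, Hz| exact: (proj1 (Hne z Hz))].
have EIgb : EI gb x0 x1 y0 y1.
  apply EI_of_cont => // z Hz; apply Cdiff_cont, Cdiff_gp; [apply Hd, Hdisk, HonQ, Hz| exact: (proj2 (Hne z Hz))].
have EIka : EI ka x0 x1 y0 y1.
  apply EI_of_cont => // z Hz; apply Cdiff_cont, Cdiff_kp; exact: (proj1 (Hne z Hz)).
have EIkb : EI kb x0 x1 y0 y1.
  apply EI_of_cont => // z Hz; apply Cdiff_cont, Cdiff_kp; exact: (proj2 (Hne z Hz)).
set c := h b - h a.
have EIckb : EI (fun z => c * kb z) x0 x1 y0 y1 by apply EI_scal.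
have EIs : EI (fun z => gb z + c * kb z) x0 x1 y0 y1 by apply: EI_plus.
have EG : Bd (fun z => (gb z + c * kb z) - ga z) x0 x1 y0 y1 = c * Bd kb x0 x1 y0 y1.
  rewrite Bd_minus //.
  rewrite Bd_plus //.
  rewrite Bd_scal // Za Zb; ring.
have BG : Cmod (Bd (fun z => (gb z + c * kb z) - ga z) x0 x1 y0 y1)
           <= 2 * ((x1 - x0) + (y1 - y0)) * (4 * M * e / (r * r)).
  apply Bd_bound => //; first by apply: EI_minus.
  move=> z Hz.
  have [Na Nb] := Hne z Hz. have [Fa Fb] := Hfar z Hz.
  have -> : gb z + c * kb z - ga z = (h z - h a) * ((b - a) * / ((z - b) * (z - a))).
    rewrite -kdiff // /gb /kb /ga /c; ring.
  have Hzd : in_disk z by apply Hdisk, HonQ.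
  have Hh : (Cmod (h z - h a) <= 2 * M)%R.
    have T := Cmod_triangle (h z) (- h a). rewrite Cmod_opp in T.
    have E : h z + - h a = h z - h a by ring. rewrite E in T.
    have := HM z Hzd. have := HM a Ha. lra.
  rewrite !Cmod_mult Cmod_inv; last by apply Cmult_neq_0; apply sub_neq0.
  rewrite Cmod_mult -/e.
  have Hpos : (0 < Cmod (z - b) * Cmod (z - a))%R by nra.
  have Hinv : (/ (Cmod (z - b) * Cmod (z - a)) <= 2 / (r * r))%R.
    rewrite /Rdiv. apply (Rmult_le_reg_r (Cmod (z - b) * Cmod (z - a))) => //.
    rewrite Rinv_l; last lra.
    apply (Rmult_le_reg_r (r * r)); first nra.
    have -> : (2 * / (r * r) * (Cmod (z - b) * Cmod (z - a)) * (r * r) = 2 * (Cmod (z - b) * Cmod (z - a)))%R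
      by field; lra.
    nra.
  have X1 := Cmod_ge_0 (h z - h a).
  have X2 : (0 <= / (Cmod (z - b) * Cmod (z - a)))%R by apply Rlt_le, Rinv_0_lt_compat.
  apply: Rle_trans.
    apply Rmult_le_compat_l => //. apply Rmult_le_compat_l => //. exact Hinv.
  apply: Rle_trans. apply Rmult_le_compat_r; last exact Hh.
    apply Rmult_le_pos => //; apply Rlt_le, Rdiv_lt_0_compat; nra.
  right; field; lra.
have BK : Cmod (Bd (fun z => kb z - ka z) x0 x1 y0 y1) <= 2 * ((x1 - x0) + (y1 - y0)) * (2 * e / (r * r)).
  apply Bd_bound => //; first by apply: EI_minus.
  move=> z Hz.
  have [Na Nb] := Hne z Hz. have [Fa Fb] := Hfar z Hz.
  rewrite /kb /ka kdiff //.
  rewrite Cmod_mult Cmod_inv; last by apply Cmult_neq_0; apply sub_neq0.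
  rewrite Cmod_mult -/e.
  have Hpos : (0 < Cmod (z - b) * Cmod (z - a))%R by nra.
  have Hinv : (/ (Cmod (z - b) * Cmod (z - a)) <= 2 / (r * r))%R.
    rewrite /Rdiv. apply (Rmult_le_reg_r (Cmod (z - b) * Cmod (z - a))) => //.
    rewrite Rinv_l; last lra.
    apply (Rmult_le_reg_r (r * r)); first nra.
    have -> : (2 * / (r * r) * (Cmod (z - b) * Cmod (z - a)) * (r * r) = 2 * (Cmod (z - b) * Cmod (z - a)))%R
      by field; lra.
    nra.
  apply: Rle_trans. apply Rmult_le_compat_l => //. exact Hinv.
  right; field; lra.
rewrite Bd_minus // in BK.
have JA := J_lower a Hr. rewrite -/x0 -/x1 -/y0 -/y1 -/ka in JA.
have Hw : ((x1 - x0) + (y1 - y0) = 4 * r)%R by rewrite /x0 /x1 /y0 /y1; ring.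
rewrite Hw in BG BK.
have BK' : Cmod (Bd kb x0 x1 y0 y1 - Bd ka x0 x1 y0 y1) <= 1 / 4.
  apply: Rle_trans BK _.
  have -> : (2 * (4 * r) * (2 * e / (r * r)) = 16 * e / r)%R by field; lra.
  apply (Rmult_le_reg_r r) => //. rewrite /Rdiv Rmult_assoc Rinv_l; lra.
have JB : 3 <= Cmod (Bd kb x0 x1 y0 y1).
  have := Cmod_rev_tri (Bd ka x0 x1 y0 y1) (Bd ka x0 x1 y0 y1 - Bd kb x0 x1 y0 y1).
  have -> : Bd ka x0 x1 y0 y1 - (Bd ka x0 x1 y0 y1 - Bd kb x0 x1 y0 y1) = Bd kb x0 x1 y0 y1 by ring.
  rewrite Cmod_sub_sym. lra.
rewrite EG Cmod_mult in BG.
have BG' : Cmod c * Cmod (Bd kb x0 x1 y0 y1) <= M / 2.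
  apply: Rle_trans BG _.
  have -> : (2 * (4 * r) * (4 * M * e / (r * r)) = 32 * M * e / r)%R by field; lra.
  apply (Rmult_le_reg_r r) => //. rewrite /Rdiv Rmult_assoc Rinv_l; last lra. nra.
have Hc0 := Cmod_ge_0 c.
rewrite -/c. nra.
Qed.

Lemma step_all (P : C -> Prop) w0 : in_disk w0 -> P w0 ->
  (forall a b, in_disk a -> Cmod (b - a) <= (1 - Cmod a) / 256 -> P a -> P b) ->
  forall w, in_disk w -> P w.
Proof.
rewrite /in_disk => H0 P0 Hs w Hw.
set rho := Rmax (Cmod w0) (Cmod w).
have Hrho : rho < 1 by rewrite /rho; apply Rmax_lub_lt.
have [N [HN HN0]] := archimed_cor1 ((1 - rho) / 512) ltac:(lra).
have HNp : 0 < INR N by apply lt_0_INR.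
set p := fun i : nat => w0 + RtoC (INR i / INR N) * (w - w0).
have Hp : forall i, (i <= N)%coq_nat -> Cmod (p i) <= rho.
  move=> i Hi. set t := (INR i / INR N)%R.
  have Ht0 : 0 <= t by apply Rdiv_le_0_compat => //; apply pos_INR.
  have Ht1 : t <= 1.
    rewrite /t; apply (Rmult_le_reg_r (INR N)) => //.
    rewrite /Rdiv Rmult_assoc Rinv_l; last lra. rewrite Rmult_1_r Rmult_1_l. by apply le_INR.
  have -> : p i = RtoC (1 - t) * w0 + RtoC t * w by rewrite /p -/t; apply C_eq => /=; ring.
  apply: Rle_trans; first apply Cmod_triangle.
  rewrite !Cmod_mult !Cmod_R !Rabs_pos_eq; try lra.
  have := Rmax_l (Cmod w0) (Cmod w); have := Rmax_r (Cmod w0) (Cmod w); rewrite -/rho => ? ?.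
  nra.
have Hd : forall i, Cmod (p i.+1 - p i) <= (1 - rho) / 256.
  move=> i.
  have -> : p i.+1 - p i = RtoC (/ INR N) * (w - w0).
    rewrite /p S_INR; apply C_eq => /=; field; lra.
  rewrite Cmod_mult Cmod_R Rabs_pos_eq; last by apply Rlt_le, Rinv_0_lt_compat.
  have : Cmod (w - w0) <= 2.
    have := Cmod_triangle w (- w0). rewrite Cmod_opp.
    have -> : w + - w0 = w - w0 by ring. lra.
  have := Cmod_ge_0 (w - w0).
  have : 0 < / INR N by apply Rinv_0_lt_compat.
  nra.
have Hall : forall i, (i <= N)%coq_nat -> P (p i).
  elim => [_|i IH Hi].
    have -> : p 0%N = w0 by rewrite /p /=; apply C_eq => /=; rewrite /Rdiv Rmult_0_l; ring.
    exact P0.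
  have Hi' : (i <= N)%coq_nat by lia.
  apply: (Hs (p i)); last exact: IH.
    rewrite /in_disk; have := Hp i Hi'; lra.
  have := Hd i; have := Hp i Hi'; lra.
have -> : w = p N by rewrite /p; apply C_eq => /=; field; lra.
apply Hall; lia.
Qed.

Lemma C1_neq_0 : (1 : C) <> 0.
Proof. move/(f_equal fst) => /=; lra. Qed.

Lemma HinfDN_gen (g : nat -> C -> C) : (forall k w, in_disk w -> Cdiff (g k) w) ->
  (exists M, forall k w, in_disk w -> Cmod (g k w) <= M) -> HinfDN g.
Proof. move=> H1 H2; split => // k w Hw; apply Cd_of_Cdiff, H1, Hw. Qed.

Definition cs (s : nat -> C) : nat -> C -> C := fun k _ => s k.
Definition bdd (s : nat -> C) := exists M, forall k, Cmod (s k) <= M.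

Lemma HinfDN_cs s : bdd s -> HinfDN (cs s).
Proof.
move=> [M HM]; apply HinfDN_gen.
  move=> k w _; exists 0; exact: Dexp_const.
by exists M => k w _; apply HM.
Qed.

Lemma bdd_const c : bdd (fun _ => c).
Proof. by exists (Cmod c) => k; lra. Qed.

Lemma char_bound phi g M : charDN phi -> HinfDN g ->
  (forall k w, in_disk w -> Cmod (g k w) <= M) -> Cmod (phi g) <= M.
Proof.
move=> [Hadd [Hscal [Hmul [Hone Heqv]]]] Hg HM.
apply Rnot_lt_le => Hlt. set l := phi g in Hlt.
have Hne : forall k w, in_disk w -> Cmod l - M <= Cmod (g k w - l).
  move=> k w Hw; have := Cmod_rev_tri l (l - g k w).
  have -> : l - (l - g k w) = g k w by ring. rewrite Cmod_sub_sym. have := HM k w Hw. lra.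
have Hnz : forall k w, in_disk w -> g k w - l <> 0.
  move=> k w Hw E; have := Hne k w Hw; rewrite E Cmod_0; lra.
have Hone' : HinfDN (fun (_ : nat) (_ : C) => 1) by apply (HinfDN_cs (bdd_const 1)).
have Hs : HinfDN (fun k w => - l * (fun (_ : nat) (_ : C) => 1) k w).
  apply HinfDN_gen.
    move=> k w _; exists 0; exact: Dexp_const.
  by exists (Cmod (- l * 1)) => k w _; lra.
have Hd : HinfDN (fun k w => g k w + - l * 1).
  apply HinfDN_gen.
    move=> k w Hw; have [L HL] := Cdiff_of_Cd (proj1 Hg k w Hw).
    exists (L + 0); apply: (Dexp_plus (f := g k) (g := fun _ => - l * 1)) => //. exact: Dexp_const.
  have [M' HM'] := proj2 Hg. exists (M' + Cmod (- l * 1))%R => k w Hw.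
  apply: Rle_trans; first apply Cmod_triangle. have := HM' k w Hw; lra.
have Hu : HinfDN (fun k w => / (g k w - l)).
  apply HinfDN_gen.
    move=> k w Hw; apply: (Cdiff_inv (f := fun w => g k w - l)); last exact: Hnz.
    apply Cdiff_sub_const, Cdiff_of_Cd, (proj1 Hg k w Hw).
  exists (/ (Cmod l - M))%R => k w Hw.
  rewrite Cmod_inv; last exact: Hnz.
  apply Rinv_le_contravar; [lra|exact: Hne].
have Hp : HinfDN (fun k w => (g k w + - l * 1) * / (g k w - l)).
  apply HinfDN_gen.
    move=> k w Hw; apply Cdiff_mul.
      have [L HL] := Cdiff_of_Cd (proj1 Hd k w Hw); by exists L.
    have [L HL] := Cdiff_of_Cd (proj1 Hu k w Hw); by exists L.
  exists 1%R => k w Hw. have -> : (g k w + - l * 1) * / (g k w - l) = 1.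
    field; exact: Hnz.
  rewrite Cmod_1; lra.
have E1 : phi (fun k w => (g k w + - l * 1) * / (g k w - l)) = phi (fun _ _ => 1).
  apply Heqv => // k w Hw /=. field; exact: Hnz.
have E2 := Hmul _ _ Hd Hu. cbv beta in E2.
have E3 := Hadd _ _ Hg Hs. cbv beta in E3.
have E4 := Hscal (- l) _ Hone'. cbv beta in E4.
rewrite E1 in E2. rewrite Hone in E2.
have E5 : phi (fun k w => g k w + - l * 1) = 0.
  rewrite E3 E4 Hone -/l; ring.
rewrite E5 Cmult_0_l in E2. exact: C1_neq_0 E2.
Qed.

Lemma C_idem (x : C) : x * x = x -> x = 0 \/ x = 1.
Proof.
move=> H.
have H' : x * (x - 1) = 0.
  have -> : x * (x - 1) = x * x - x by ring. rewrite H; ring.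
have := f_equal Cmod H'; rewrite Cmod_mult Cmod_0 => /Rmult_integral [/Cmod_eq_0 ->|/Cmod_eq_0 E].
  by left.
right; have -> : x = (x - 1) + 1 by ring. rewrite E; ring.
Qed.

Lemma idem_val phi e : charDN phi -> HinfDN e ->
  (forall k w, in_disk w -> e k w * e k w = e k w) -> phi e = 0 \/ phi e = 1.
Proof.
move=> [Hadd [Hscal [Hmul [Hone Heqv]]]] He Hi.
apply C_idem.
have Hee : HinfDN (fun k w => e k w * e k w).
  apply HinfDN_gen.
    move=> k w Hw; apply: Cdiff_mul; apply: Cdiff_of_Cd; exact: (proj1 He k w Hw).
  have [M HM] := proj2 He. exists (M * M)%R => k w Hw. rewrite Cmod_mult.
  have := HM k w Hw; have := Cmod_ge_0 (e k w); nra.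
rewrite -(Hmul _ _ He He). exact: Heqv.
Qed.

Lemma bdd_cs_bound s M : (forall k, Cmod (s k) <= M) -> forall k w, in_disk w -> Cmod (cs s k w) <= M.
Proof. by move=> H k w _; apply H. Qed.

Lemma ch_affine phi s a b : charDN phi -> bdd s ->
  phi (cs (fun k => a * s k + b)) = a * phi (cs s) + b.
Proof.
move=> [Hadd [Hscal [Hmul [Hone Heqv]]]] Hs.
have E : cs (fun k => a * s k + b) =
  (fun k w => (fun k w => a * cs s k w) k w + (fun k w => b * (fun (_ : nat) (_ : C) => 1) k w) k w).
  by apply functional_extensionality => k; apply functional_extensionality => w; rewrite /cs; ring.
have H1 : HinfDN (cs s) by apply HinfDN_cs.
have H2 : HinfDN (fun (_ : nat) (_ : C) => 1) by apply (HinfDN_cs (bdd_const 1)).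
rewrite E Hadd.
- rewrite Hscal // Hscal // Hone; ring.
- have [M HM] := Hs. apply (HinfDN_cs (s := fun k => a * s k)). exists (Cmod a * M)%R => k.
  rewrite Cmod_mult; apply Rmult_le_compat_l; [apply Cmod_ge_0|apply HM].
- apply (HinfDN_cs (bdd_const (b * 1))).
Qed.

Lemma ch_mul phi s t : charDN phi -> bdd s -> bdd t ->
  phi (cs (fun k => s k * t k)) = phi (cs s) * phi (cs t).
Proof.
move=> [Hadd [Hscal [Hmul [Hone Heqv]]]] Hs Ht.
exact: (Hmul (cs s) (cs t) (HinfDN_cs Hs) (HinfDN_cs Ht)).
Qed.

Lemma tau_const_idem tau w0 E : analytic_disk_map tau -> in_disk w0 -> HinfDN E ->
  (forall k w, in_disk w -> E k w * E k w = E k w) ->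
  (forall k w, in_disk w -> Cmod (E k w) <= 1) ->
  forall w, in_disk w -> tau w E = tau w0 E.
Proof.
move=> [Hch [_ [_ Hhol]]] Hw0 HE Hi Hb.
apply: (@step_all (fun w => tau w E = tau w0 E) w0) => // a b Ha Hab Pa.
have Hbd : in_disk b.
  rewrite /in_disk in Ha *. have := Cmod_triangle a (b - a). have -> : a + (b - a) = b by ring.
  have := Cmod_ge_0 a. lra.
have [_ Hdiff] := Hhol E HE.
have Hest := @est (fun w => tau w E) 1%R a b
  (fun w Hw => Cdiff_of_Cd (Hdiff w Hw))
  (fun w Hw => char_bound (Hch w Hw) HE Hb) Ha Hab.
rewrite -Pa.
have [Va|Va] := idem_val (Hch a Ha) HE Hi; have [Vb|Vb] := idem_val (Hch b Hbd) HE Hi;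
  rewrite Va Vb //; rewrite Va Vb in Hest.
- have : Cmod (1 - 0) = 1.
    have -> : (1 - 0 : C) = RtoC 1 by apply C_eq => /=; ring.
    by rewrite Cmod_R Rabs_R1.
  lra.
- have : Cmod (0 - 1) = 1.
    have -> : (0 - 1 : C) = RtoC (-1) by apply C_eq => /=; ring.
    by rewrite Cmod_R Rabs_Ropp Rabs_R1.
  lra.
Qed.

Lemma cs_ext s t : (forall k, s k = t k) -> cs s = cs t.
Proof. by move=> H; rewrite (functional_extensionality s t H). Qed.

Lemma partA tau w0 s : analytic_disk_map tau -> in_disk w0 -> bdd s ->
  forall w, in_disk w -> tau w (cs s) = tau w0 (cs s).
Proof.
move=> Ht Hw0 Hs w Hw.
have Hch := proj1 Ht.
have HcW0 := Hch w0 Hw0. have HcW := Hch w Hw.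
set c := tau w0 (cs s). set d := tau w (cs s) - c.
case: (Ceq_dec d 0) => Hd0.
  have -> : tau w (cs s) = d + c by rewrite /d; ring. rewrite Hd0; ring.
have Hdp : 0 < Cmod d by apply Cmod_gt_0.
set be := fun k => s k - c.
have Hbe : bdd be.
  have [M HM] := Hs; exists (M + Cmod c)%R => k; rewrite /be.
  have := Cmod_triangle (s k) (- c); rewrite Cmod_opp. have := HM k.
  have -> : s k + - c = s k - c by ring. lra.
have Ebe : cs be = cs (fun k => 1 * s k + - c) by apply cs_ext => k; rewrite /be; ring.
have Hbe0 : tau w0 (cs be) = 0 by rewrite Ebe ch_affine // -/c; ring.
have Hbe1 : tau w (cs be) = d by rewrite Ebe ch_affine // /d; ring.
set cond := fun k => Rle_dec (Cmod d / 2) (Cmod (be k)).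
set e := fun k => if cond k then (1 : C) else 0.
set u := fun k => if cond k then / be k else 0.
set f := fun k => if cond k then (0 : C) else 1.
have He : bdd e by exists 1%R => k; rewrite /e; case: (cond k) => ? /=; rewrite ?Cmod_1 ?Cmod_0; lra.
have Hf : bdd f by exists 1%R => k; rewrite /f; case: (cond k) => ? /=; rewrite ?Cmod_1 ?Cmod_0; lra.
have Hu : bdd u.
  exists (/ (Cmod d / 2))%R => k; rewrite /u; case: (cond k) => H /=.
  - have Hb0 : be k <> 0 by apply Cmod_gt_0; lra.
    rewrite Cmod_inv //; apply Rinv_le_contravar => //; lra.
  - rewrite Cmod_0; apply Rlt_le, Rinv_0_lt_compat; lra.
have C1 : tau w0 (cs e) = 0.
  have -> : cs e = cs (fun k => be k * u k).
    apply cs_ext => k; rewrite /e /u; case: (cond k) => H /=.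
    - have Hb0 : be k <> 0 by apply Cmod_gt_0; lra.
      by field.
    - ring.
  rewrite ch_mul // Hbe0; ring.
have C2 : tau w (cs f) = 0.
  have [//|H1] := idem_val (Hch w Hw) (HinfDN_cs Hf)
    (fun k w' _ => ltac:(rewrite /cs /f; case: (cond k) => ? /=; ring)).
  exfalso.
  have E : tau w (cs (fun k => f k * be k)) = d by rewrite ch_mul // H1 Hbe1; ring.
  have Hfb : bdd (fun k => f k * be k).
    have [M HM] := Hbe; exists M => k; rewrite /f; case: (cond k) => ? /=.
      rewrite Cmult_0_l Cmod_0; have := HM k; have := Cmod_ge_0 (be k); lra.
    by rewrite Cmult_1_l.
  have := @char_bound (tau w) (cs (fun k => f k * be k)) (Cmod d / 2)%R (Hch w Hw) (HinfDN_cs Hfb).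
  rewrite E => X.
  have : Cmod d <= Cmod d / 2.
    apply X => k w' _; rewrite /cs /f; case: (cond k) => H /=.
    - rewrite Cmult_0_l Cmod_0; lra.
    - rewrite Cmult_1_l; have := Rnot_le_lt _ _ H; lra.
  lra.
have C3 : tau w (cs e) = 1.
  have Ef : cs f = cs (fun k => (-1) * e k + 1) by apply cs_ext => k; rewrite /f /e; case: (cond k) => ? /=; ring.
  move: C2; rewrite Ef ch_affine // => X.
  have -> : tau w (cs e) = - ((-1) * tau w (cs e) + 1) + 1 by ring.
  rewrite X; ring.
have := @tau_const_idem tau w0 (cs e) Ht Hw0 (HinfDN_cs He)
  (fun k w' _ => ltac:(rewrite /cs /e; case: (cond k) => ? /=; ring))
  (fun k w' _ => ltac:(rewrite /cs /e; case: (cond k) => ? /=; rewrite ?Cmod_1 ?Cmod_0; lra)) w Hw.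
rewrite C1 C3 => X. exfalso; exact: C1_neq_0 X.
Qed.

Lemma HinfDN_of_Hinf1 f : Hinf1 f -> HinfDN (fun _ => f).
Proof. move=> [[M HM] Hd]; split => //; exists M => k w Hw; exact: HM. Qed.

Definition psi (tau : C -> (nat -> C -> C) -> C) w : (C -> C) -> C :=
  fun f => tau w (fun _ w' => f w').

Lemma char1_psi tau w : charDN (tau w) -> char1 (psi tau w).
Proof.
move=> [Hadd [Hscal [Hmul [Hone Heqv]]]].
split; [|split; [|split; [|split]]].
- move=> f g Hf Hg; exact: (Hadd _ _ (HinfDN_of_Hinf1 Hf) (HinfDN_of_Hinf1 Hg)).
- move=> c f Hf; exact: (Hscal c _ (HinfDN_of_Hinf1 Hf)).
- move=> f g Hf Hg; exact: (Hmul _ _ (HinfDN_of_Hinf1 Hf) (HinfDN_of_Hinf1 Hg)).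
- exact: Hone.
- move=> f g Hf Hg He; apply: Heqv; try exact: HinfDN_of_Hinf1.
  move=> k w' Hw'; exact: He.
Qed.

Lemma disk_step a b : in_disk a -> Cmod (b - a) <= (1 - Cmod a) / 256 -> in_disk b.
Proof.
rewrite /in_disk => Ha Hab. have := Cmod_triangle a (b - a). have -> : a + (b - a) = b by ring.
have := Cmod_ge_0 a. lra.
Qed.

Lemma partB tau w0 xin : analytic_disk_map tau -> in_disk w0 -> in_Ms xin ->
  char1_eq (psi tau w0) xin -> forall w, in_disk w -> char1_eq (psi tau w) xin.
Proof.
move=> Ht Hw0 [Hx1 HxMs] P0.
have [Hch [_ [_ Hhol]]] := Ht.
apply: (@step_all (fun w => char1_eq (psi tau w) xin) w0) => // a b Ha Hab Pa.
have Hb := @disk_step a b Ha Hab.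
have Hrho : Rbar_lt (rho xin (psi tau b)) (Coquelicot.Rbar.Finite 1%R).
  apply: (@Rbar_le_lt_trans _ (Coquelicot.Rbar.Finite (1 / 4)%R)); last by simpl; lra.
  rewrite /rho. have [_ Hl] := Lub_Rbar_correct
    (fun r => exists f, Hinf1 f /\ (forall w, in_disk w -> Cmod (f w) <= 1)
                              /\ xin f = 0 /\ r = Cmod (psi tau b f)).
  apply Hl => r [f [Hf [Hf1 [Hxf ->]]]].
  simpl.
  set h := fun w => tau w (fun _ w' => f w').
  have HfD := HinfDN_of_Hinf1 Hf.
  have [_ Hdh] := Hhol _ HfD.
  have Hest := @est h 1%R a b (fun w Hw => Cdiff_of_Cd (Hdh w Hw))
    (fun w Hw => char_bound (Hch w Hw) HfD (fun k w' Hw' => Hf1 w' Hw')) Ha Hab.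
  have Ha0 : h a = 0 by rewrite /h -Hxf; exact: (Pa f Hf).
  rewrite Ha0 in Hest.
  have E0 : h b - 0 = h b by ring. rewrite E0 in Hest.
  change (Cmod (h b) <= 1 / 4). lra.
have Hc1 := @char1_psi tau b (Hch b Hb).
apply NNPP => Hn. apply HxMs. split => //.
exists (psi tau b); split => //; split => //.
move=> Heq; apply Hn => f Hf; symmetry; exact: Heq.
Qed.

Lemma ext_poly n (z : 'I_n.-1 -> C) w : in_polydisk z -> in_disk w -> in_polydisk (ext z w).
Proof. move=> Hz Hw j; rewrite /ext; case: insub => [j'|] /=; [exact: Hz|exact: Hw]. Qed.

Lemma HinfDN_Rmap n (Hn : (0 < n)%N) (z : nat -> 'I_n.-1 -> C) f :
  (forall k, in_polydisk (z k)) -> Hinf f -> HinfDN (Rmap z f).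
Proof.
move=> Hz [[M HM] [_ Hdf]]; split; last first.
  exists M => k w Hw; apply HM, ext_poly => //.
move=> k w Hw.
have Hlt : (n.-1 < n)%N by rewrite prednK // leqnn.
set jn := Ordinal Hlt.
have Hjn : forall u, ext (z k) u jn = u.
  move=> u; rewrite /ext insubF //= ltnn //.
have Hupd : (fun u => f (upd (ext (z k) w) jn u)) = (fun u => f (ext (z k) u)).
  apply functional_extensionality => u; f_equal.
  apply functional_extensionality => i; rewrite /upd.
  case: eqP => [->|Hne]; first by rewrite Hjn.
  rewrite /ext; case: insubP => [i' _ _|Hni] //=.
  exfalso; apply Hne; apply val_inj => /=.
  have H1 : (n.-1 <= i)%N by rewrite leqNgt.
  have H2 : (i <= n.-1)%N by rewrite -ltnS prednK // ltn_ord.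
  by apply/eqP; rewrite eqn_leq H2 H1.
have D := Hdf (ext (z k) w) (ext_poly (Hz k) Hw) jn.
rewrite Hupd Hjn in D. exact: D.
Qed.

Lemma charn_Rstar n (z : nat -> 'I_n.-1 -> C) phi :
  (forall k, in_polydisk (z k)) -> (0 < n)%N -> charDN phi -> charn (Rstar z phi).
Proof.
move=> Hz Hn [Hadd [Hscal [Hmul [Hone Heqv]]]].
have HR := fun f (Hf : Hinf f) => @HinfDN_Rmap n Hn z f Hz Hf.
split; [|split; [|split; [|split]]].
- move=> f g Hf Hg; exact: (Hadd _ _ (HR _ Hf) (HR _ Hg)).
- move=> c f Hf; exact: (Hscal c _ (HR _ Hf)).
- move=> f g Hf Hg; exact: (Hmul _ _ (HR _ Hf) (HR _ Hg)).
- exact: Hone.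
- move=> f g Hf Hg He; apply: Heqv; try exact: HR.
  move=> k w Hw; rewrite /Rmap; apply He, ext_poly => //.
Qed.

Unset Implicit Arguments.

Theorem lemma5p2 (n : nat) (Hn : (2 <= n)%N)
  (xi' : 'I_n.-1 -> (C -> C) -> C) (xin : (C -> C) -> C)
  (Hxi' : forall j, in_Ma (xi' j)) (Hxin : in_Ms xin)
  (z : nat -> 'I_n.-1 -> C) (s : 'I_n.-1 -> nat -> C)
  (Hs : forall j, interpolating1 (s j))
  (Hprod : is_cartesian_product z s)
  (Hz : interpolating z)
  (Hcl : in_closure_seq z xi')
  (tau : C -> (nat -> C -> C) -> C) (Htau : analytic_disk_map tau)
  (w0 : C) (Hw0 : in_disk w0)
  (Heta : in_fiber (join_pt xi' xin) (Rstar z (tau w0))) :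
  forall w : C, in_disk w -> in_fiber (join_pt xi' xin) (Rstar z (tau w)).
Proof.
move=> w Hw.
have Hn0 : (0 < n)%N by apply: leq_trans Hn.
have Hzp := proj1 Hz.
split; first exact: charn_Rstar Hzp Hn0 (proj1 Htau w Hw).
move=> j.
have Hj := proj2 Heta j.
move: Hj; rewrite /char1_eq /pi_n /Rstar /Rmap /ext /join_pt.
case: (insub (nat_of_ord j)) => [j'|] /= Hj f Hf.
- rewrite -(Hj f Hf).
  have Hb : bdd (fun k => f (z k j')).
    have [[M HM] _] := Hf. exists M => k; apply HM, Hzp.
  exact: (partA Htau Hw0 Hb Hw).
- have P0 : char1_eq (psi tau w0) xin by move=> g Hg; exact: Hj g Hg.
  exact: (@partB tau w0 xin Htau Hw0 Hxin P0 w Hw f Hf).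
Qed.
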